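(* (i) If two links are related by an odd number of $\pm(2,2)$-moves, then they are not $5$-move equivalent. (ii) $F_L(1,2\cos(2\pi/5))$ is an invariant of $5$-move equivalence of links.
   Context: A $\pm(2,2)$-move is a rational $\pm\frac52$-move: a sub-tangle of the link consisting of two parallel arcs (Conway's tangle $[0]$, in a ball meeting the link in two arcs) is replaced by the rational tangle $[\frac52]$ or $[-\frac52]$ (the tangle obtained from two half-twists followed by two half-twists in the perpendicular direction, or its mirror image). A $5$-move replaces $[0]$ by five half-twists $[5]$; $5$-move equivalence is generated by isotopy and $5$-moves and their inverses. $F_L(1,x)=Q_L(x)$ is the Brandt–Lickorish–Millett–Ho polynomial of unoriented links: $Q_{\text{unknot}}=1$ and $Q_{L_+}+Q_{L_-}=x(Q_{L_0}+Q_{L_\infty})$ for unoriented diagrams differing in a disk by a crossing, the opposite crossing, and its two smoothings. *)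

(* Defs.v *)
(* Unoriented link diagrams are encoded as Morse (plat) words
   in the unoriented tangle category: a diagram is a list of elementary
   slices read bottom to top; each slice is a cup, cap, or crossing acting
   at a given strand position.  Link isotopy is the equivalence generated by
   Turaev's local relations (planar interchange, zig-zag, Reidemeister I, II,
   III, and crossing/cup-cap slides), applied anywhere in a diagram. *)
From Stdlib Require Import Reals List Arith Relations.
Import ListNotations.
Open Scope R_scope.

Inductive elem : Type := Cup | Cap | Xp | Xn.
(* Xp at k : the strand from bottom position k to top position k+1 passes
   over the strand from bottom k+1 to top k;  Xn at k : it passes under. *)

Record slice : Type := Sl { pos : nat; el : elem }.
Definition diagram : Type := list slice.

Definition ins (e : elem) : nat := match e with Cup => 0 | _ => 2 end.
Definition outs (e : elem) : nat := match e with Cap => 0 | _ => 2 end.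

Fixpoint tangle (w : nat) (d : diagram) (w' : nat) : Prop :=
  match d with
  | [] => w' = w
  | s :: d' => (pos s + ins (el s) <= w)%nat /\
               tangle (w - ins (el s) + outs (el s))%nat d' w'
  end.

Definition link (d : diagram) : Prop := tangle 0 d 0.

Definition shift (k : nat) (d : diagram) : diagram :=
  map (fun s => Sl (k + pos s) (el s)) d.

(* Elementary local isotopy relations (Turaev's moves, unframed). *)
Inductive basic : diagram -> diagram -> Prop :=
  | b_comm : forall a i b j, (i + outs a <= j)%nat ->
      basic [Sl i a; Sl j b] [Sl (j + ins a - outs a) b; Sl i a]
  | b_zig1 : forall k, basic [Sl (S k) Cup; Sl k Cap] []
  | b_zig2 : forall k, basic [Sl k Cup; Sl (S k) Cap] []
  | b_r2a : forall k, basic [Sl k Xp; Sl k Xn] []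
  | b_r2b : forall k, basic [Sl k Xn; Sl k Xp] []
  | b_r3 : forall k, basic [Sl k Xp; Sl (S k) Xp; Sl k Xp]
                           [Sl (S k) Xp; Sl k Xp; Sl (S k) Xp]
  | b_r1cp : forall k, basic [Sl k Cup; Sl k Xp] [Sl k Cup]
  | b_r1cn : forall k, basic [Sl k Cup; Sl k Xn] [Sl k Cup]
  | b_r1ap : forall k, basic [Sl k Xp; Sl k Cap] [Sl k Cap]
  | b_r1an : forall k, basic [Sl k Xn; Sl k Cap] [Sl k Cap]
  | b_scp : forall k, basic [Sl k Cup; Sl (S k) Xp] [Sl (S k) Cup; Sl k Xn]
  | b_scn : forall k, basic [Sl k Cup; Sl (S k) Xn] [Sl (S k) Cup; Sl k Xp]
  | b_sap : forall k, basic [Sl k Xp; Sl (S k) Cap] [Sl (S k) Xn; Sl k Cap]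
  | b_san : forall k, basic [Sl k Xn; Sl (S k) Cap] [Sl (S k) Xp; Sl k Cap].

Definition iso_step (D1 D2 : diagram) : Prop :=
  exists p u v s w w', tangle 0 p w /\ tangle w u w' /\ tangle w v w' /\
    tangle w' s 0 /\ basic u v /\ D1 = p ++ u ++ s /\ D2 = p ++ v ++ s.

Definition iso : diagram -> diagram -> Prop := clos_refl_sym_trans _ iso_step.

(* Local move: two parallel arcs (the tangle [0], i.e. two parallel vertical
   strands at positions k, k+1 of a diagram) are replaced by the 2->2
   tangle T. *)
Definition local_move (T : diagram) (D1 D2 : diagram) : Prop :=
  exists p s w k, tangle 0 p w /\ (k + 2 <= w)%nat /\ tangle w s 0 /\
    D1 = p ++ s /\ D2 = p ++ shift k T ++ s.

(* The ball is drawn so that [0] is the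
   identity (two vertical strands); a horizontal twist (adding [1]) is then
   a crossing stacked on top, a vertical twist (T*[1]) adds a crossing [1]
   to the right of T.  c is the crossing type of [1] (Xp or its mirror Xn). *)
Definition htw (c : elem) (T : diagram) : diagram := T ++ [Sl 0 c].
Definition vtw (c : elem) (T : diagram) : diagram :=
  [Sl 1 Cup] ++ T ++ [Sl 2 c; Sl 1 Cap].
Definition tinf : diagram := [Sl 0 Cap; Sl 0 Cup].

(* [5/2] = [2 2] = (([oo]*[1])*[1]) + [1] + [1]; the mirror gives [-5/2] *)
Definition T52 (c : elem) : diagram := htw c (htw c (vtw c (vtw c tinf))).
Definition T5 (c : elem) : diagram := repeat (Sl 0 c) 5.

Definition step5 (D1 D2 : diagram) : Prop :=
  iso_step D1 D2 \/ local_move (T5 Xp) D1 D2 \/ local_move (T5 Xn) D1 D2.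
Definition equiv5 : diagram -> diagram -> Prop := clos_refl_sym_trans _ step5.

Definition one22 (D1 D2 : diagram) : Prop :=
  exists E1 E2, iso D1 E1 /\ iso E2 D2 /\
    (local_move (T52 Xp) E1 E2 \/ local_move (T52 Xn) E1 E2 \/
     local_move (T52 Xp) E2 E1 \/ local_move (T52 Xn) E2 E1).

Inductive chain22 : nat -> diagram -> diagram -> Prop :=
  | ch0 : forall D E, iso D E -> chain22 0 D E
  | chS : forall n D E F, one22 D E -> chain22 n E F -> chain22 (S n) D F.

Definition unknot : diagram := [Sl 0 Cup; Sl 0 Cap].

(* Q is the BLMH polynomial evaluated at x: an isotopy invariant of
   unoriented links, normalized on the unknot, satisfying
   Q(L+) + Q(L-) = x (Q(L0) + Q(Loo)). *)
Definition is_Q_at (x : R) (Q : diagram -> R) : Prop :=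
  (forall D E, link D -> iso D E -> Q D = Q E) /\
  Q unknot = 1 /\
  (forall p s w k, tangle 0 p w -> (k + 2 <= w)%nat -> tangle w s 0 ->
     Q (p ++ Sl k Xp :: s) + Q (p ++ Sl k Xn :: s) =
     x * (Q (p ++ s) + Q (p ++ Sl k Cap :: Sl k Cup :: s))).

(* Main.v *)
(* Proof via a Goeritz/Gauss-sum state model over Z[zeta_5]. *)
From Stdlib Require Import Reals Lra ZArith Lia List Arith Bool FunctionalExtensionality Classical Relations.
Require Import Defs.
Import ListNotations.

(* ===== the ring K = Z[zeta]/(Phi5) ===== *)
Record K := mkK { k0 : Z; k1 : Z; k2 : Z; k3 : Z }.
Definition K0 := mkK 0 0 0 0.
Definition K1 := mkK 1 0 0 0.
Definition Kadd x y := mkK (k0 x + k0 y)%Z (k1 x + k1 y)%Z (k2 x + k2 y)%Z (k3 x + k3 y)%Z.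
Definition Kopp x := mkK (- k0 x)%Z (- k1 x)%Z (- k2 x)%Z (- k3 x)%Z.
Definition Ksub x y := Kadd x (Kopp y).
Definition Kmul x y :=
  let a0 := k0 x in let a1 := k1 x in let a2 := k2 x in let a3 := k3 x in
  let b0 := k0 y in let b1 := k1 y in let b2 := k2 y in let b3 := k3 y in
  let c0 := (a0*b0)%Z in
  let c1 := (a0*b1 + a1*b0)%Z in
  let c2 := (a0*b2 + a1*b1 + a2*b0)%Z in
  let c3 := (a0*b3 + a1*b2 + a2*b1 + a3*b0)%Z in
  let c4 := (a1*b3 + a2*b2 + a3*b1)%Z in
  let c5 := (a2*b3 + a3*b2)%Z in
  let c6 := (a3*b3)%Z in
  mkK (c0 - c4 + c5)%Z (c1 - c4 + c6)%Z (c2 - c4)%Z (c3 - c4)%Z.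

Lemma Kring : ring_theory K0 K1 Kadd Kmul Ksub Kopp (@eq K).
Proof.
  constructor; intros; repeat match goal with x : K |- _ => destruct x end;
  unfold Kadd, Kmul, Ksub, Kopp, K0, K1; cbn [k0 k1 k2 k3]; try reflexivity; f_equal; ring.
Qed.
Add Ring Kr : Kring.

Definition zeta := mkK 0 1 0 0.
Fixpoint Kpow (x : K) (n : nat) : K := match n with O => K1 | S n => Kmul x (Kpow x n) end.
Definition zp (z : Z) : K := Kpow zeta (Z.to_nat (z mod 5)).
Definition r5 : K := Kadd (Kadd zeta (Kopp (Kpow zeta 2))) (Kadd (Kopp (Kpow zeta 3)) (Kpow zeta 4)).

Fixpoint ins_at (j : nat) (x : nat) (s : list nat) : list nat :=
  match j, s with
  | O, _ => x :: s
  | S j, y :: s => y :: ins_at j x s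
  | S j, [] => [x]
  end.
Fixpoint rem_at (j : nat) (s : list nat) : list nat :=
  match j, s with
  | O, _ :: s => s
  | S j, y :: s => y :: rem_at j s
  | _, [] => []
  end.
Fixpoint set_at (j : nat) (x : nat) (s : list nat) : list nat :=
  match j, s with
  | O, _ :: s => x :: s
  | S j, y :: s => y :: set_at j x s
  | _, [] => []
  end.

Record Mod := { V : Type; vadd : V -> V -> V; vzero : V; vsc : K -> V -> V }.

Definition sum5 (M : Mod) (f : nat -> V M) : V M :=
  fold_right (fun z acc => vadd M (f z) acc) (vzero M) [0;1;2;3;4]%nat.

Definition eta (e : elem) (odd : bool) : Z :=
  match e, odd with
  | Xp, true => 1 | Xp, false => -1 | Xn, true => -1 | Xn, false => 1 | _, _ => 0 end.
Definition wt (e : elem) (odd : bool) (a c : nat) : K :=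
  zp (eta e odd * (Z.of_nat a - Z.of_nat c) * (Z.of_nat a - Z.of_nat c))%Z.

Definition stepj (M : Mod) (j : nat) (odd : bool) (e : elem)
  (F : list nat -> V M) (s : list nat) : V M :=
  match e, odd with
  | Cup, false => sum5 M (fun z => F (ins_at j z s))
  | Cup, true => F (ins_at (S j) (nth j s 0%nat) s)
  | Cap, false => F (rem_at j s)
  | Cap, true => if Nat.eqb (nth j s 0%nat) (nth (S j) s 0%nat) then F (rem_at (S j) s) else vzero M
  | _, false => sum5 M (fun z => vsc M (wt e false (nth j s 0%nat) z) (F (set_at j z s)))
  | _, true => vsc M (wt e true (nth j s 0%nat) (nth (S j) s 0%nat)) (F s)
  end.
Definition step (M : Mod) (sl : slice) (F : list nat -> V M) : list nat -> V M :=
  stepj M (Nat.div2 (pos sl)) (Nat.odd (pos sl)) (el sl) F.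
Definition Ev (M : Mod) (d : diagram) (F : list nat -> V M) : list nat -> V M :=
  fold_right (fun sl G => step M sl G) F d.

Definition KM : Mod := {| V := K; vadd := Kadd; vzero := K0; vsc := Kmul |}.
Definition FL := list (K * list nat).
Definition flsc (c : K) (L : FL) : FL := map (fun p => (Kmul c (fst p), snd p)) L.
Definition FM : Mod := {| V := FL; vadd := @app _; vzero := []; vsc := flsc |}.
Definition base (t : list nat) : FL := [(K1, t)].
Definition G (D : diagram) : K := Ev KM D (fun _ => K1) [].

Definition feval (L : FL) (H : list nat -> K) : K :=
  fold_right (fun p acc => Kadd (Kmul (fst p) (H (snd p))) acc) K0 L.

Lemma feval_app L1 L2 H : feval (L1 ++ L2) H = Kadd (feval L1 H) (feval L2 H).
Proof. induction L1 as [|[c t] L IH]; simpl. ring. rewrite IH. ring. Qed.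
Lemma feval_sc c L H : feval (flsc c L) H = Kmul c (feval L H).
Proof. induction L as [|[c' t] L IH]; simpl. ring. rewrite IH. ring. Qed.

Lemma step_feval sl (Phi : list nat -> FL) H s :
  step KM sl (fun t => feval (Phi t) H) s = feval (step FM sl Phi s) H.
Proof.
  unfold step, stepj, sum5. destruct (el sl), (Nat.odd (pos sl)); simpl;
  repeat rewrite ?feval_app, ?feval_sc; simpl; try reflexivity.
  destruct (Nat.eqb _ _); reflexivity.
Qed.

Lemma step_ext (M : Mod) sl (F F' : list nat -> V M) s :
  (forall t, F t = F' t) -> step M sl F s = step M sl F' s.
Proof.
  intro E. unfold step, stepj, sum5. destruct (el sl), (Nat.odd (pos sl)); simpl;
  rewrite ?E; reflexivity.
Qed.

Lemma Ev_feval d (Phi : list nat -> FL) H s :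
  Ev KM d (fun t => feval (Phi t) H) s = feval (Ev FM d Phi s) H.
Proof.
  revert s. induction d as [|sl d IH]; intro s; simpl. reflexivity.
  rewrite <- step_feval. apply (step_ext KM). exact IH.
Qed.

Lemma Kid (x : K) : x = Kadd (Kmul K1 x) K0.
Proof. ring. Qed.

Lemma Ev_base d H s : Ev KM d H s = feval (Ev FM d base s) H.
Proof.
  rewrite <- Ev_feval. revert s. induction d as [|sl d IH]; intro s; simpl.
  unfold base, feval; simpl. apply Kid. apply (step_ext KM). exact IH.
Qed.

Fixpoint lcmp (a b : list nat) : comparison :=
  match a, b with
  | [], [] => Eq | [], _ => Lt | _, [] => Gt
  | x :: a, y :: b => match Nat.compare x y with Eq => lcmp a b | c => c end
  end.
Lemma lcmp_eq a b : lcmp a b = Eq -> a = b.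
Proof.
  revert b; induction a as [|x a IH]; intros [|y b]; simpl; try discriminate; auto.
  destruct (Nat.compare x y) eqn:E; try discriminate.
  apply Nat.compare_eq in E. intro H. f_equal; auto.
Qed.
Fixpoint finsert (p : K * list nat) (L : FL) : FL :=
  match L with
  | [] => [p]
  | q :: L' => match lcmp (snd p) (snd q) with
               | Eq => (Kadd (fst p) (fst q), snd q) :: L'
               | Lt => p :: L
               | Gt => q :: finsert p L'
               end
  end.
Lemma feval_finsert p L H : feval (finsert p L) H = Kadd (Kmul (fst p) (H (snd p))) (feval L H).
Proof.
  induction L as [|q L IH]; simpl. reflexivity.
  destruct (lcmp (snd p) (snd q)) eqn:E; simpl.
  - apply lcmp_eq in E. rewrite E. ring.
  - reflexivity.
  - rewrite IH. ring.
Qed.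
Definition Keqb (x y : K) : bool :=
  (Z.eqb (k0 x) (k0 y) && Z.eqb (k1 x) (k1 y) && Z.eqb (k2 x) (k2 y) && Z.eqb (k3 x) (k3 y))%bool.
Lemma Keqb_eq x y : Keqb x y = true -> x = y.
Proof.
  destruct x, y; unfold Keqb; simpl. intro H.
  repeat rewrite andb_true_iff in H. destruct H as [[[H0 H1] H2] H3].
  apply Z.eqb_eq in H0, H1, H2, H3. subst. reflexivity.
Qed.
Definition norm (L : FL) : FL :=
  filter (fun p => negb (Keqb (fst p) K0)) (fold_right finsert [] L).
Lemma feval_filter L H : feval (filter (fun p => negb (Keqb (fst p) K0)) L) H = feval L H.
Proof.
  induction L as [|[c t] L IH]; simpl. reflexivity.
  destruct (Keqb c K0) eqn:E; simpl; rewrite IH; try reflexivity.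
  apply Keqb_eq in E. subst. ring.
Qed.
Lemma feval_norm L H : feval (norm L) H = feval L H.
Proof.
  unfold norm. rewrite feval_filter. induction L as [|p L IH]; simpl. reflexivity.
  rewrite feval_finsert, IH. reflexivity.
Qed.
Fixpoint Leqb (a b : list nat) : bool :=
  match a, b with [], [] => true | x :: a, y :: b => Nat.eqb x y && Leqb a b | _, _ => false end.
Lemma Leqb_eq a b : Leqb a b = true -> a = b.
Proof.
  revert b; induction a as [|x a IH]; intros [|y b]; simpl; try discriminate; auto.
  rewrite andb_true_iff. intros [E1 E2]. apply Nat.eqb_eq in E1. f_equal; auto.
Qed.
Fixpoint FLeqb (A B : FL) : bool :=
  match A, B with
  | [], [] => true
  | p :: A, q :: B => Keqb (fst p) (fst q) && Leqb (snd p) (snd q) && FLeqb A B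
  | _, _ => false end.
Lemma FLeqb_eq A B : FLeqb A B = true -> A = B.
Proof.
  revert B; induction A as [|[c t] A IH]; intros [|[c' t'] B]; simpl; try discriminate; auto.
  rewrite !andb_true_iff. intros [[E1 E2] E3]. apply Keqb_eq in E1. apply Leqb_eq in E2.
  subst. f_equal; auto.
Qed.

Fixpoint wins (n : nat) : list (list nat) :=
  match n with O => [[]] | S n => flat_map (fun m => map (fun z => z :: m) [0;1;2;3;4]%nat) (wins n) end.
Definition good (s : list nat) : Prop := Forall (fun x => x < 5)%nat s.
Lemma wins_in m : good m -> In m (wins (length m)).
Proof.
  induction 1 as [|x m Hx Hm IH]; simpl. auto.
  apply in_flat_map. exists m. split; auto.
  assert (x = 0 \/ x = 1 \/ x = 2 \/ x = 3 \/ x = 4)%nat as HH by lia.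
  simpl. destruct HH as [->|[->|[->|[->| ->]]]]; auto 6.
Qed.

Definition check (u v : diagram) (M : nat) (c1 c2 : K) : bool :=
  forallb (fun m => FLeqb (norm (flsc c1 (Ev FM u base m))) (norm (flsc c2 (Ev FM v base m)))) (wins M).
Lemma check_sound u v M c1 c2 : check u v M c1 c2 = true ->
  forall m H, good m -> length m = M -> Kmul c1 (Ev KM u H m) = Kmul c2 (Ev KM v H m).
Proof.
  intros C m H Hg Hl. unfold check in C. rewrite forallb_forall in C.
  specialize (C m). subst M. specialize (C (wins_in m Hg)).
  apply FLeqb_eq in C. rewrite !Ev_base.
  rewrite <- !feval_sc, <- (feval_norm (flsc c1 _)), <- (feval_norm (flsc c2 _)), C. reflexivity.
Qed.

Definition touchok (j : nat) (odd : bool) (e : elem) (n : nat) : bool :=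
  match e, odd with
  | Cup, false => Nat.leb j n
  | Cup, true => Nat.ltb j n
  | Cap, false => Nat.ltb j n
  | Cap, true => Nat.ltb (S j) n
  | _, false => Nat.ltb j n
  | _, true => Nat.ltb (S j) n
  end.
Definition newlen (e : elem) (n : nat) : nat :=
  match e with Cup => S n | Cap => pred n | _ => n end.
Fixpoint fits (d : diagram) (n : nat) : bool :=
  match d with
  | [] => true
  | sl :: d => touchok (Nat.div2 (pos sl)) (Nat.odd (pos sl)) (el sl) n && fits d (newlen (el sl) n)
  end.
Definition K5 : K := mkK 5 0 0 0.

Lemma nth_frame l m r j : (j < length m)%nat -> nth (length l + j) (l ++ m ++ r) 0%nat = nth j m 0%nat.
Proof.
  intro H. induction l as [|x l IH]; simpl; auto.
  revert j H; induction m as [|y m IHm]; intros [|j] H; simpl in *; try lia; auto.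
  apply IHm. lia.
Qed.
Lemma ins_frame l m r j z : (j <= length m)%nat -> ins_at (length l + j) z (l ++ m ++ r) = l ++ ins_at j z m ++ r.
Proof.
  intro H. induction l as [|x l IH]; simpl; [|rewrite IH; auto].
  revert j H; induction m as [|y m IHm]; intros [|j] H; simpl in *; try lia; auto.
  rewrite IHm; auto. lia.
Qed.
Lemma rem_frame l m r j : (j < length m)%nat -> rem_at (length l + j) (l ++ m ++ r) = l ++ rem_at j m ++ r.
Proof.
  intro H. induction l as [|x l IH]; simpl; [|rewrite IH; auto].
  revert j H; induction m as [|y m IHm]; intros [|j] H; simpl in *; try lia; auto.
  rewrite IHm; auto. lia.
Qed.
Lemma set_frame l m r j z : (j < length m)%nat -> set_at (length l + j) z (l ++ m ++ r) = l ++ set_at j z m ++ r.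
Proof.
  intro H. induction l as [|x l IH]; simpl; [|rewrite IH; auto].
  revert j H; induction m as [|y m IHm]; intros [|j] H; simpl in *; try lia; auto.
  rewrite IHm; auto. lia.
Qed.
Lemma ins_len j z m : (j <= length m)%nat -> length (ins_at j z m) = S (length m).
Proof. revert j; induction m as [|y m IH]; intros [|j] H; simpl in *; try lia; auto. rewrite IH; lia. Qed.
Lemma rem_len j m : (j < length m)%nat -> length (rem_at j m) = pred (length m).
Proof. revert j; induction m as [|y m IH]; intros [|j] H; simpl in *; try lia; auto. rewrite IH; lia. Qed.
Lemma set_len j z m : length (set_at j z m) = length m.
Proof. revert j; induction m as [|y m IH]; intros [|j]; simpl in *; auto. Qed.

Lemma div2_dbl n k : Nat.div2 (2 * n + k) = (n + Nat.div2 k)%nat.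
Proof.
  induction n as [|n IH]; [reflexivity|].
  replace (2 * S n + k)%nat with (S (S (2 * n + k))) by lia.
  transitivity (S (Nat.div2 (2 * n + k))); [reflexivity|]. rewrite IH. lia.
Qed.
Lemma odd_dbl n k : Nat.odd (2 * n + k) = Nat.odd k.
Proof.
  induction n as [|n IH]; [reflexivity|].
  replace (2 * S n + k)%nat with (S (S (2 * n + k))) by lia.
  rewrite Nat.odd_succ_succ. exact IH.
Qed.

Lemma step_frame (M : Mod) l m r k e F :
  touchok (Nat.div2 k) (Nat.odd k) e (length m) = true ->
  step M (Sl (2 * length l + k)%nat e) F (l ++ m ++ r) = step M (Sl k e) (fun t => F (l ++ t ++ r)) m.
Proof.
  unfold step; cbn [pos el]. rewrite div2_dbl, odd_dbl.
  destruct e, (Nat.odd k); unfold stepj, sum5, touchok; cbn [fold_right]; intro T;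
  rewrite ?Nat.leb_le, ?Nat.ltb_lt in T;
  rewrite ?plus_n_Sm, ?ins_frame, ?rem_frame, ?set_frame, ?nth_frame; try lia; try reflexivity.
Qed.

Lemma step_ext_len (M : Mod) sl (F F' : list nat -> V M) m :
  touchok (Nat.div2 (pos sl)) (Nat.odd (pos sl)) (el sl) (length m) = true ->
  (forall t, length t = newlen (el sl) (length m) -> F t = F' t) ->
  step M sl F m = step M sl F' m.
Proof.
  unfold step. destruct (el sl), (Nat.odd (pos sl)); unfold stepj, sum5, touchok, newlen;
  cbn [fold_right]; intros T E; rewrite ?Nat.leb_le, ?Nat.ltb_lt in T;
  rewrite ?E; try reflexivity; rewrite ?ins_len, ?rem_len, ?set_len; try lia; reflexivity.
Qed.

Lemma Ev_frame (M : Mod) l r u F m :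
  fits u (length m) = true ->
  Ev M (Defs.shift (2 * length l)%nat u) F (l ++ m ++ r) = Ev M u (fun t => F (l ++ t ++ r)) m.
Proof.
  revert m; induction u as [|[k e] u IH]; intros m Hf; simpl. reflexivity.
  simpl in Hf. apply andb_true_iff in Hf as [T Hf].
  change (step M (Sl (2 * length l + k)%nat e) (Ev M (Defs.shift (2 * length l)%nat u) F) (l ++ m ++ r) = step M (Sl k e) (Ev M u (fun t => F (l ++ t ++ r))) m).
  rewrite step_frame by exact T.
  apply (step_ext_len M (Sl k e)). exact T.
  intros t Ht. simpl in Ht. apply IH. rewrite Ht. exact Hf.
Qed.

Lemma tangle_app w d1 d2 w'' : tangle w (d1 ++ d2) w'' <-> exists w', tangle w d1 w' /\ tangle w' d2 w''.
Proof.
  revert w; induction d1 as [|sl d1 IH]; intro w; simpl.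
  - split. intro H; exists w; auto. intros [w' [-> H]]; exact H.
  - split.
    + intros [H1 H2]. apply IH in H2 as [w' [A B]]. exists w'; auto.
    + intros [w' [[H1 H2] B]]. split; auto. apply IH. exists w'; auto.
Qed.

Lemma parity_cases k : exists j, (k = 2 * j + 0 \/ k = 2 * j + 1)%nat.
Proof. destruct (Nat.Even_or_Odd k) as [[j ->]|[j ->]]; exists j; lia. Qed.

Lemma slice_ok p k e h : (2 * p + k + ins e <= 2 * h)%nat ->
  touchok (Nat.div2 k) (Nat.odd k) e (h - p) = true /\
  (2 * h - ins e + outs e = 2 * (p + newlen e (h - p)))%nat.
Proof.
  destruct (parity_cases k) as [j [-> | ->]]; rewrite div2_dbl, odd_dbl; simpl Nat.div2; simpl Nat.odd;
  destruct e; unfold touchok, newlen, ins, outs; cbn [Nat.odd Nat.even Nat.div2 negb];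
  rewrite ?Nat.leb_le, ?Nat.ltb_lt; intros; split; lia.
Qed.

Lemma shift0 u : Defs.shift 0 u = u.
Proof. induction u as [|[k e] u IH]; simpl; auto. rewrite IH; reflexivity. Qed.
Lemma shift_shift a b u : Defs.shift a (Defs.shift b u) = Defs.shift (a + b) u.
Proof. induction u as [|[k e] u IH]; simpl; auto. rewrite IH, Nat.add_assoc; reflexivity. Qed.
Lemma shift_app a u v : Defs.shift a (u ++ v) = Defs.shift a u ++ Defs.shift a v.
Proof. apply map_app. Qed.

Lemma tangle_fits u h p w' : tangle (2 * h) (Defs.shift (2 * p) u) w' ->
  fits u (h - p) = true /\ exists h', w' = (2 * h')%nat.
Proof.
  revert h; induction u as [|[k e] u IH]; intros h T; simpl in *.
  - split; auto. exists h; auto.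
  - destruct T as [T1 T2]. destruct (slice_ok p k e h T1) as [A B].
    simpl in B. rewrite B in T2. apply IH in T2 as [C D]. split; auto.
    rewrite A. simpl. replace (p + newlen e (h - p) - p)%nat with (newlen e (h - p)) in C by lia.
    exact C.
Qed.

Definition okloc (u v : diagram) (M : nat) (c1 c2 : K) : bool :=
  check u v M c1 c2 && fits u M && fits v M && forallb (fun n => negb (fits u n)) (seq 0 M).

Lemma split3 (t : list nat) p M : (p + M <= length t)%nat ->
  exists l m r, t = l ++ m ++ r /\ length l = p /\ length m = M.
Proof.
  intro H. exists (firstn p t), (firstn M (skipn p t)), (skipn M (skipn p t)).
  rewrite !firstn_skipn. split; auto. rewrite !length_firstn, length_skipn. split; lia.
Qed.

Lemma local_apply u v M c1 c2 p h w' t H :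
  okloc u v M c1 c2 = true -> tangle (2 * h) (Defs.shift (2 * p) u) w' ->
  good t -> length t = h -> (p <= h)%nat ->
  Kmul c1 (Ev KM (Defs.shift (2 * p) u) H t) = Kmul c2 (Ev KM (Defs.shift (2 * p) v) H t).
Proof.
  unfold okloc. rewrite !andb_true_iff. intros [[[C Fu] Fv] Mi] T Hg Hl Hp.
  destruct (tangle_fits _ _ _ _ T) as [Fh _].
  assert (HM : (M <= h - p)%nat).
  { destruct (le_lt_dec M (h - p)) as [|Hlt]; auto.
    rewrite forallb_forall in Mi. specialize (Mi (h - p)%nat). rewrite in_seq in Mi.
    rewrite Fh in Mi. simpl in Mi. discriminate (Mi ltac:(lia)). }
  destruct (split3 t p M ltac:(lia)) as [l [m [r [-> [Hl1 Hm]]]]].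
  subst p. rewrite !Ev_frame by (rewrite Hm; assumption).
  unfold good in Hg. rewrite !Forall_app in Hg.
  apply check_sound with (M := M); tauto.
Qed.

Lemma Ev_app (M : Mod) d1 d2 F s : Ev M (d1 ++ d2) F s = Ev M d1 (Ev M d2 F) s.
Proof. unfold Ev. rewrite fold_right_app. reflexivity. Qed.

Lemma Ev_ext (M : Mod) d (F F' : list nat -> V M) s : (forall t, F t = F' t) -> Ev M d F s = Ev M d F' s.
Proof.
  intro E. revert s; induction d as [|sl d IH]; intro s; simpl. apply E. apply step_ext. exact IH.
Qed.

Lemma Ev_lin d F c s : Ev KM d (fun t => Kmul c (F t)) s = Kmul c (Ev KM d F s).
Proof.
  revert s; induction d as [|sl d IH]; intro s; simpl. reflexivity.
  transitivity (step KM sl (fun t => Kmul c (Ev KM d F t)) s). apply (step_ext KM). exact IH.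
  unfold step, stepj, sum5. destruct (el sl), (Nat.odd (pos sl)); cbn [fold_right vadd vsc vzero KM];
  try ring. destruct (Nat.eqb _ _); simpl; ring.
Qed.

Ltac gsolve := unfold good in *; repeat (first [apply Forall_nil | apply Forall_cons]); auto.
Lemma good_ins j z s : good s -> (z < 5)%nat -> good (ins_at j z s).
Proof. intros H Hz. revert j; induction H as [|x s Hx Hs IH]; intros [|j]; simpl; gsolve. Qed.
Lemma good_rem j s : good s -> good (rem_at j s).
Proof. intro H. revert j; induction H as [|x s Hx Hs IH]; intros [|j]; simpl; gsolve. Qed.
Lemma good_set j z s : good s -> (z < 5)%nat -> good (set_at j z s).
Proof. intros H Hz. revert j; induction H as [|x s Hx Hs IH]; intros [|j]; simpl; gsolve. Qed.
Lemma good_nth j s : good s -> (j < length s)%nat -> (nth j s 0 < 5)%nat.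
Proof. intros H Hj. unfold good in H. rewrite Forall_forall in H. apply H. apply nth_In. exact Hj. Qed.

Lemma step_ext_good sl (F F' : list nat -> K) s :
  touchok (Nat.div2 (pos sl)) (Nat.odd (pos sl)) (el sl) (length s) = true -> good s ->
  (forall t, good t -> length t = newlen (el sl) (length s) -> F t = F' t) ->
  step KM sl F s = step KM sl F' s.
Proof.
  unfold step. destruct (el sl), (Nat.odd (pos sl)); unfold stepj, sum5, touchok, newlen;
  cbn [fold_right]; intros T Hg E; rewrite ?Nat.leb_le, ?Nat.ltb_lt in T;
  rewrite ?E; try reflexivity;
  repeat first [ apply good_ins | apply good_rem | apply good_set | apply good_nth | assumption | lia
               | rewrite ins_len | rewrite rem_len | rewrite set_len | reflexivity ].
Qed.

Lemma Ev_ext_tangle d h0 w F F' : tangle (2 * h0) d w ->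
  (forall t, good t -> (2 * length t)%nat = w -> F t = F' t) ->
  forall s, good s -> length s = h0 -> Ev KM d F s = Ev KM d F' s.
Proof.
  revert h0; induction d as [|[k e] d IH]; intros h0 T E s Hg Hl; simpl in *.
  - apply E; auto. lia.
  - destruct T as [T1 T2].
    destruct (slice_ok 0 k e h0 ltac:(lia)) as [A B].
    rewrite Nat.sub_0_r in A, B. simpl in B. rewrite B in T2.
    apply (step_ext_good (Sl k e)); simpl; rewrite ?Hl; auto.
    intros t Ht Hlt. apply (IH _ T2); auto.
Qed.

Lemma ctx_rel p u v s w w' c1 c2 :
  tangle 0 p w -> tangle w' s 0 ->
  (forall t, good t -> (2 * length t)%nat = w ->
     Kmul c1 (Ev KM u (Ev KM s (fun _ => K1)) t) = Kmul c2 (Ev KM v (Ev KM s (fun _ => K1)) t)) ->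
  Kmul c1 (G (p ++ u ++ s)) = Kmul c2 (G (p ++ v ++ s)).
Proof.
  intros Tp Ts E. unfold G. rewrite !Ev_app.
  rewrite <- !Ev_lin. apply (Ev_ext_tangle p 0 w); auto.
  - intros t Hg Hl. rewrite !Ev_app. apply E; auto.
  - constructor.
Qed.

Definition Pos (c : K) : Prop := exists n, c = Kpow r5 n.
Lemma Pos1 : Pos K1. Proof. exists 0%nat; reflexivity. Qed.
Lemma Posr : Pos r5. Proof. exists 1%nat; simpl; ring. Qed.
Lemma Pos5 : Pos K5. Proof. exists 2%nat; vm_compute; reflexivity. Qed.
Lemma Kpow_add x a b : Kpow x (a + b) = Kmul (Kpow x a) (Kpow x b).
Proof. induction a as [|a IH]; simpl. ring. rewrite IH. ring. Qed.
Lemma PosM a b : Pos a -> Pos b -> Pos (Kmul a b).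
Proof. intros [n ->] [m ->]. exists (n + m)%nat. rewrite Kpow_add. reflexivity. Qed.

Definition locrel (u v : diagram) (h : nat) : Prop :=
  exists c1 c2, Pos c1 /\ Pos c2 /\
    forall H t, good t -> length t = h -> Kmul c1 (Ev KM u H t) = Kmul c2 (Ev KM v H t).

Lemma loc_helper u0 v0 M c1 c2 j h w' u v :
  okloc u0 v0 M c1 c2 = true -> Pos c1 -> Pos c2 ->
  u = Defs.shift (2 * j) u0 -> v = Defs.shift (2 * j) v0 ->
  tangle (2 * h) u w' -> (j <= h)%nat -> locrel u v h.
Proof.
  intros C P1 P2 -> -> T Hj. exists c1, c2. split; auto. split; auto.
  intros H t Hg Hl. eapply local_apply; eauto.
Qed.

Ltac eqd := unfold Defs.shift; simpl; repeat match goal with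
  | |- @cons _ _ _ = @cons _ _ _ => f_equal
  | |- {| pos := _; el := _ |} = _ => f_equal; lia
  | |- @nil _ = @nil _ => reflexivity end.
Ltac tryall u0 v0 j T :=
  first [ exact Pos1 | exact Posr | exact Pos5
        | solve [eqd]
        | exact T
        | simpl in T; lia
        | vm_compute; reflexivity ].
Ltac lh u0 v0 j T :=
  let tac M c1 c2 := solve [eapply (loc_helper u0 v0 M c1 c2 j); tryall u0 v0 j T] in
  first [ tac 0%nat K1 K1 | tac 1%nat K1 K1 | tac 2%nat K1 K1 | tac 3%nat K1 K1
        | tac 0%nat K1 r5 | tac 1%nat K1 r5 | tac 2%nat K1 r5
        | tac 1%nat K1 K5 | tac 2%nat K1 K5 | tac 2%nat r5 K1 ].

Lemma basic_rel_nc u v h w' : basic u v ->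
  (forall a i b j, u = [Sl i a; Sl j b] -> v = [Sl (j + ins a - outs a) b; Sl i a] -> (i + outs a <= j)%nat -> locrel u v h) ->
  tangle (2 * h) u w' -> locrel u v h.
Proof.
  destruct 1 as [a i b j Hij | k | k | k | k | k | k | k | k | k | k | k | k | k]; intros Hc T.
  - apply (Hc a i b j); auto.
  - destruct (parity_cases k) as [j [Hk|Hk]]; subst k.
    + lh ([Sl (S 0) Cup; Sl 0 Cap]) (@nil slice) j T.
    + lh ([Sl (S 1) Cup; Sl 1 Cap]) (@nil slice) j T.
  - destruct (parity_cases k) as [j [Hk|Hk]]; subst k.
    + lh ([Sl 0 Cup; Sl (S 0) Cap]) (@nil slice) j T.
    + lh ([Sl 1 Cup; Sl (S 1) Cap]) (@nil slice) j T.
  - destruct (parity_cases k) as [j [Hk|Hk]]; subst k.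
    + lh ([Sl 0 Xp; Sl 0 Xn]) (@nil slice) j T.
    + lh ([Sl 1 Xp; Sl 1 Xn]) (@nil slice) j T.
  - destruct (parity_cases k) as [j [Hk|Hk]]; subst k.
    + lh ([Sl 0 Xn; Sl 0 Xp]) (@nil slice) j T.
    + lh ([Sl 1 Xn; Sl 1 Xp]) (@nil slice) j T.
  - destruct (parity_cases k) as [j [Hk|Hk]]; subst k.
    + lh ([Sl 0 Xp; Sl (S 0) Xp; Sl 0 Xp]) ([Sl (S 0) Xp; Sl 0 Xp; Sl (S 0) Xp]) j T.
    + lh ([Sl 1 Xp; Sl (S 1) Xp; Sl 1 Xp]) ([Sl (S 1) Xp; Sl 1 Xp; Sl (S 1) Xp]) j T.
  - destruct (parity_cases k) as [j [Hk|Hk]]; subst k.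
    + lh ([Sl 0 Cup; Sl 0 Xp]) ([Sl 0 Cup]) j T.
    + lh ([Sl 1 Cup; Sl 1 Xp]) ([Sl 1 Cup]) j T.
  - destruct (parity_cases k) as [j [Hk|Hk]]; subst k.
    + lh ([Sl 0 Cup; Sl 0 Xn]) ([Sl 0 Cup]) j T.
    + lh ([Sl 1 Cup; Sl 1 Xn]) ([Sl 1 Cup]) j T.
  - destruct (parity_cases k) as [j [Hk|Hk]]; subst k.
    + lh ([Sl 0 Xp; Sl 0 Cap]) ([Sl 0 Cap]) j T.
    + lh ([Sl 1 Xp; Sl 1 Cap]) ([Sl 1 Cap]) j T.
  - destruct (parity_cases k) as [j [Hk|Hk]]; subst k.
    + lh ([Sl 0 Xn; Sl 0 Cap]) ([Sl 0 Cap]) j T.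
    + lh ([Sl 1 Xn; Sl 1 Cap]) ([Sl 1 Cap]) j T.
  - destruct (parity_cases k) as [j [Hk|Hk]]; subst k.
    + lh ([Sl 0 Cup; Sl (S 0) Xp]) ([Sl (S 0) Cup; Sl 0 Xn]) j T.
    + lh ([Sl 1 Cup; Sl (S 1) Xp]) ([Sl (S 1) Cup; Sl 1 Xn]) j T.
  - destruct (parity_cases k) as [j [Hk|Hk]]; subst k.
    + lh ([Sl 0 Cup; Sl (S 0) Xn]) ([Sl (S 0) Cup; Sl 0 Xp]) j T.
    + lh ([Sl 1 Cup; Sl (S 1) Xn]) ([Sl (S 1) Cup; Sl 1 Xp]) j T.
  - destruct (parity_cases k) as [j [Hk|Hk]]; subst k.
    + lh ([Sl 0 Xp; Sl (S 0) Cap]) ([Sl (S 0) Xn; Sl 0 Cap]) j T.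
    + lh ([Sl 1 Xp; Sl (S 1) Cap]) ([Sl (S 1) Xn; Sl 1 Cap]) j T.
  - destruct (parity_cases k) as [j [Hk|Hk]]; subst k.
    + lh ([Sl 0 Xn; Sl (S 0) Cap]) ([Sl (S 0) Xp; Sl 0 Cap]) j T.
    + lh ([Sl 1 Xn; Sl (S 1) Cap]) ([Sl (S 1) Xp; Sl 1 Cap]) j T.
Qed.

Lemma feval_ext L A B : (forall t, A t = B t) -> feval L A = feval L B.
Proof. intro E. induction L as [|[c t] L IH]; simpl; auto. rewrite E, IH. reflexivity. Qed.
Lemma feval_add L A B : feval L (fun t => Kadd (A t) (B t)) = Kadd (feval L A) (feval L B).
Proof. induction L as [|[c t] L IH]; simpl. ring. rewrite IH. ring. Qed.
Lemma feval_scal L c A : feval L (fun t => Kmul c (A t)) = Kmul c (feval L A).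
Proof. induction L as [|[c' t] L IH]; simpl. ring. rewrite IH. ring. Qed.
Lemma feval_zero L : feval L (fun _ => K0) = K0.
Proof. induction L as [|[c' t] L IH]; simpl. ring. rewrite IH. ring. Qed.
Lemma feval_swap L1 L2 (X : list nat -> list nat -> K) :
  feval L1 (fun t1 => feval L2 (fun t2 => X t1 t2)) = feval L2 (fun t2 => feval L1 (fun t1 => X t1 t2)).
Proof.
  induction L1 as [|[c t] L IH]; simpl.
  - symmetry. apply feval_zero.
  - rewrite IH, feval_add, feval_scal. reflexivity.
Qed.
Lemma step_swap s1 s2 m1 m2 (X : list nat -> list nat -> K) :
  step KM s1 (fun t1 => step KM s2 (fun t2 => X t1 t2) m2) m1 =
  step KM s2 (fun t2 => step KM s1 (fun t1 => X t1 t2) m1) m2.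
Proof.
  change (Ev KM [s1] (fun t1 => Ev KM [s2] (fun t2 => X t1 t2) m2) m1 =
          Ev KM [s2] (fun t2 => Ev KM [s1] (fun t1 => X t1 t2) m1) m2).
  rewrite Ev_base. rewrite (feval_ext _ _ (fun t1 => feval (Ev FM [s2] base m2) (fun t2 => X t1 t2)))
    by (intro; apply Ev_base).
  rewrite feval_swap. rewrite (Ev_base [s2]). apply feval_ext. intro t2. symmetry. apply Ev_base.
Qed.

Definition wi (e : elem) (i0 : nat) : nat :=
  match e, i0 with Cup, 0 => 0 | Cup, _ => 1 | _, 0 => 1 | _, _ => 2 end%nat.
Definition wo (e : elem) (i0 : nat) : nat := newlen e (wi e i0).

Lemma comm_core a b i0 j0 l m1 g m2 r H :
  touchok (Nat.div2 i0) (Nat.odd i0) a (length m1) = true ->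
  touchok (Nat.div2 j0) (Nat.odd j0) b (length m2) = true ->
  Ev KM [Sl (2 * length l + i0) a; Sl (2 * (length l + newlen a (length m1) + length g) + j0) b] H
     (l ++ m1 ++ g ++ m2 ++ r) =
  Ev KM [Sl (2 * (length l + length m1 + length g) + j0) b; Sl (2 * length l + i0) a] H
     (l ++ m1 ++ g ++ m2 ++ r).
Proof.
  intros Ta Tb. cbn [Ev fold_right].
  rewrite step_frame by exact Ta.
  transitivity (step KM (Sl i0 a) (fun t1 => step KM (Sl j0 b) (fun t2 => H (l ++ t1 ++ g ++ t2 ++ r)) m2) m1).
  { apply (step_ext_len KM (Sl i0 a)). exact Ta. intros t1 Ht1. simpl in Ht1.
    replace (l ++ t1 ++ g ++ m2 ++ r) with ((l ++ t1 ++ g) ++ m2 ++ r) by (rewrite <- !app_assoc; reflexivity).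
    replace (2 * (length l + newlen a (length m1) + length g) + j0)%nat
      with (2 * length (l ++ t1 ++ g) + j0)%nat by (rewrite !length_app; lia).
    rewrite step_frame by exact Tb. apply (step_ext KM). intro t2. rewrite <- !app_assoc. reflexivity. }
  rewrite step_swap.
  replace (l ++ m1 ++ g ++ m2 ++ r) with ((l ++ m1 ++ g) ++ m2 ++ r) by (rewrite <- !app_assoc; reflexivity).
  replace (2 * (length l + length m1 + length g) + j0)%nat
      with (2 * length (l ++ m1 ++ g) + j0)%nat by (rewrite !length_app; lia).
  rewrite step_frame by exact Tb.
  apply (step_ext_len KM (Sl j0 b)). exact Tb. intros t2 Ht2.
  rewrite <- !app_assoc. rewrite step_frame by exact Ta.
  apply (step_ext KM). intro t1. reflexivity.
Qed.

Lemma comm_disj a b p i0 q j0 h w' : (i0 <= 1)%nat -> (j0 <= 1)%nat -> (p + wo a i0 <= q)%nat ->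
  tangle (2 * h) [Sl (2 * p + i0) a; Sl (2 * q + j0) b] w' ->
  locrel [Sl (2 * p + i0) a; Sl (2 * q + j0) b] [Sl (2 * q + j0 + ins a - outs a) b; Sl (2 * p + i0) a] h.
Proof.
  intros Hi0 Hj0 Hpq T. exists K1, K1. split. exact Pos1. split. exact Pos1.
  intros H t Hg Hl. f_equal.
  assert (Hlen : (p + wi a i0 + (q - p - wo a i0) + wi b j0 <= h)%nat).
  { simpl in T. destruct a, b, i0 as [|[|]], j0 as [|[|]]; simpl in *; lia. }
  destruct (split3 t p (wi a i0) ltac:(lia)) as [l [m1 [rest [-> [Hl1 Hm1]]]]].
  rewrite !length_app in Hl.
  destruct (split3 rest (q - p - wo a i0) (wi b j0) ltac:(lia)) as [g [m2 [r [-> [Hg1 Hm2]]]]].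
  pose proof (comm_core a b i0 j0 l m1 g m2 r H) as C.
  rewrite Hm1, Hm2, Hl1, Hg1 in C.
  replace (2 * (p + newlen a (wi a i0) + (q - p - wo a i0)) + j0)%nat with (2 * q + j0)%nat in C
    by (unfold wo in *; lia).
  replace (2 * (p + wi a i0 + (q - p - wo a i0)) + j0)%nat with (2 * q + j0 + ins a - outs a)%nat in C
    by (unfold wo in *; destruct a, i0 as [|[|]]; simpl in *; lia).
  apply C; destruct a, b, i0 as [|[|]], j0 as [|[|]]; try lia; reflexivity.
Qed.

Lemma XX : True. Proof. exact I. Qed.
Lemma comm_rel a i b j h w' : (i + outs a <= j)%nat -> tangle (2 * h) [Sl i a; Sl j b] w' ->
  locrel [Sl i a; Sl j b] [Sl (j + ins a - outs a) b; Sl i a] h.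
Proof.
  intros Hij T.
  destruct (parity_cases i) as [p [Hi|Hi]]; destruct (parity_cases j) as [q [Hj|Hj]]; subst i j.
  - eapply comm_disj; [lia | lia | destruct a; simpl in *; lia | exact T].
  - eapply comm_disj; [lia | lia | destruct a; simpl in *; lia | exact T].
  - destruct (Nat.eq_dec (2 * q + 0) (2 * p + 1 + outs a)) as [E|E].
    + destruct a; simpl in E; lia.
    + eapply comm_disj; [lia | lia | destruct a; simpl in *; lia | exact T].
  - destruct (Nat.eq_dec (2 * q + 1) (2 * p + 1 + outs a)) as [E|E].
    + destruct a, b; simpl in E.
      all: match goal with |- locrel [Sl _ ?a; Sl _ ?b] _ _ =>
        lh ([Sl 1 a; Sl (1 + outs a) b]) ([Sl (1 + ins a) b; Sl 1 a]) p T end.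
    + eapply comm_disj; [lia | lia | destruct a; simpl in *; lia | exact T].
Qed.

Lemma basic_rel u v h w' : basic u v -> tangle (2 * h) u w' -> locrel u v h.
Proof.
  intros B T. apply (basic_rel_nc u v h w' B); auto.
  intros a i b j -> -> Hij. eapply comm_rel; eauto.
Qed.

Definition Rel (D1 D2 : diagram) : Prop :=
  exists c1 c2, Pos c1 /\ Pos c2 /\ Kmul c1 (G D1) = Kmul c2 (G D2).

Lemma even_width p w : tangle 0 p w -> exists h, w = (2 * h)%nat.
Proof. intro T. rewrite <- (shift0 p) in T. apply (tangle_fits p 0 0 w T). Qed.

Lemma link3 p u s w w' : tangle 0 p w -> tangle w u w' -> tangle w' s 0 -> link (p ++ u ++ s).
Proof. intros A B C. unfold link. apply tangle_app. exists w. split; auto. apply tangle_app. eauto. Qed.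

Lemma iso_step_rel D1 D2 : iso_step D1 D2 -> Rel D1 D2 /\ link D1 /\ link D2.
Proof.
  intros [p [u [v [s [w [w' [Tp [Tu [Tv [Ts [B [-> ->]]]]]]]]]]]].
  split; [|split; eapply link3; eauto].
  destruct (even_width p w Tp) as [h ->].
  destruct (basic_rel u v h w' B Tu) as [c1 [c2 [P1 [P2 E]]]].
  exists c1, c2. split; auto. split; auto.
  apply (ctx_rel p u v s (2 * h) w'); auto.
  intros t Hg Hl. apply E; auto. lia.
Qed.

Lemma Rel_refl D : Rel D D.
Proof. exists K1, K1. split. exact Pos1. split. exact Pos1. reflexivity. Qed.
Lemma Rel_sym D E : Rel D E -> Rel E D.
Proof. intros [c1 [c2 [A [B C]]]]. exists c2, c1. auto. Qed.
Lemma Rel_trans D E F : Rel D E -> Rel E F -> Rel D F.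
Proof.
  intros [c1 [c2 [A [B C]]]] [c3 [c4 [A' [B' C']]]].
  exists (Kmul c3 c1), (Kmul c2 c4). split. apply PosM; auto. split. apply PosM; auto.
  transitivity (Kmul c3 (Kmul c1 (G D))). ring. rewrite C.
  transitivity (Kmul c2 (Kmul c3 (G E))). ring. rewrite C'. ring.
Qed.

Lemma iso_rel D E : iso D E -> Rel D E.
Proof.
  induction 1.
  - apply iso_step_rel in H. tauto.
  - apply Rel_refl.
  - apply Rel_sym; auto.
  - eapply Rel_trans; eauto.
Qed.

Lemma move_rel T M0 M1 c0 c1 D1 D2 :
  okloc (Defs.shift 0 T) [] M0 K1 c0 = true -> okloc (Defs.shift 1 T) [] M1 K1 c1 = true ->
  (forall k w, (k + 2 <= w)%nat -> tangle w (Defs.shift k T) w) ->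
  local_move T D1 D2 ->
  exists c, (c = c0 \/ c = c1) /\ G D2 = Kmul c (G D1) /\ link D1 /\ link D2.
Proof.
  intros O0 O1 TT [p [s [w [k [Tp [Hk [Ts [-> ->]]]]]]]].
  destruct (even_width p w Tp) as [h ->].
  assert (L1 : link (p ++ s)) by (apply (link3 p [] s (2*h) (2*h)); simpl; auto).
  assert (L2 : link (p ++ Defs.shift k T ++ s)) by (apply (link3 p _ s (2*h) (2*h)); auto).
  destruct (parity_cases k) as [j [Hj|Hj]]; subst k;
    [exists c0 | exists c1]; (split; [auto|]); (split; [|auto]);
    match goal with |- G ?X = _ => transitivity (Kmul K1 (G X)); [ring|] end; change (p ++ s) with (p ++ [] ++ s);
    apply (ctx_rel p _ [] s (2 * h) (2 * h)); auto;
    intros t Hg Hl; rewrite <- shift_shift; change (Ev KM [] ?F t) with (Ev KM (Defs.shift (2 * j) []) F t);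
    (eapply (local_apply _ _ _ _ _ j h); [eassumption | | auto | lia | lia];
     rewrite shift_shift; apply TT; lia).
Qed.

Lemma tangle_shift_T52 c k w : c = Xp \/ c = Xn -> (k + 2 <= w)%nat -> tangle w (Defs.shift k (T52 c)) w.
Proof. intros [-> | ->] H; unfold T52, htw, vtw, tinf; simpl; repeat split; lia. Qed.
Lemma tangle_shift_T5 c k w : c = Xp \/ c = Xn -> (k + 2 <= w)%nat -> tangle w (Defs.shift k (T5 c)) w.
Proof. intros [-> | ->] H; unfold T5; simpl; repeat split; lia. Qed.

Definition ARel (D1 D2 : diagram) : Prop :=
  exists c1 c2, Pos c1 /\ Pos c2 /\ Kmul c1 (G D1) = Kopp (Kmul c2 (G D2)).

Lemma T5_rel c D1 D2 : c = Xp \/ c = Xn -> local_move (T5 c) D1 D2 -> Rel D1 D2 /\ link D1 /\ link D2.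
Proof.
  intros Hc Lm.
  assert (Hm : exists c0 c1 M0 M1, okloc (Defs.shift 0 (T5 c)) [] M0 K1 c0 = true /\
      okloc (Defs.shift 1 (T5 c)) [] M1 K1 c1 = true /\ Pos c0 /\ Pos c1).
  { exists (Kpow r5 5), K1, 1%nat, 2%nat.
    destruct Hc as [-> | ->]; (split; [vm_compute; reflexivity|]);
    (split; [vm_compute; reflexivity|]); split; (exists 5%nat; reflexivity) || exact Pos1. }
  destruct Hm as [c0 [c1 [M0 [M1 [O0 [O1 [P0 P1]]]]]]].
  destruct (move_rel _ _ _ _ _ D1 D2 O0 O1 (fun k w => tangle_shift_T5 c k w Hc) Lm) as [k [Hk [E [L1 L2]]]].
  split; auto. exists k, K1. split. destruct Hk; subst; auto. split. exact Pos1. rewrite E. ring.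
Qed.

Lemma T52_rel c D1 D2 : c = Xp \/ c = Xn -> local_move (T52 c) D1 D2 -> ARel D1 D2 /\ link D1 /\ link D2.
Proof.
  intros Hc Lm.
  assert (Hm : exists c0 c1 M0 M1, okloc (Defs.shift 0 (T52 c)) [] M0 K1 (Kopp c0) = true /\
      okloc (Defs.shift 1 (T52 c)) [] M1 K1 (Kopp c1) = true /\ Pos c0 /\ Pos c1).
  { exists (Kpow r5 3), r5, 1%nat, 2%nat.
    destruct Hc as [-> | ->]; (split; [vm_compute; reflexivity|]);
    (split; [vm_compute; reflexivity|]); split; (exists 3%nat; reflexivity) || exact Posr. }
  destruct Hm as [c0 [c1 [M0 [M1 [O0 [O1 [P0 P1]]]]]]].
  destruct (move_rel _ _ _ _ _ D1 D2 O0 O1 (fun k w => tangle_shift_T52 c k w Hc) Lm) as [k [Hk [E [L1 L2]]]].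
  split; auto.
  destruct Hk as [-> | ->]; [exists c0 | exists c1]; exists K1; (split; [auto|]); (split; [exact Pos1|]);
  rewrite E; ring.
Qed.

Lemma ARel_sym D E : ARel D E -> ARel E D.
Proof. intros [c1 [c2 [A [B C]]]]. exists c2, c1. split; auto. split; auto. rewrite C. ring. Qed.
Lemma ARel_Rel D E F : ARel D E -> Rel E F -> ARel D F.
Proof.
  intros [c1 [c2 [A [B C]]]] [c3 [c4 [A' [B' C']]]].
  exists (Kmul c3 c1), (Kmul c2 c4). split. apply PosM; auto. split. apply PosM; auto.
  transitivity (Kmul c3 (Kmul c1 (G D))). ring. rewrite C.
  transitivity (Kopp (Kmul c2 (Kmul c3 (G E)))). ring. rewrite C'. ring.
Qed.
Lemma Rel_ARel D E F : Rel D E -> ARel E F -> ARel D F.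
Proof.
  intros [c1 [c2 [A [B C]]]] [c3 [c4 [A' [B' C']]]].
  exists (Kmul c3 c1), (Kmul c2 c4). split. apply PosM; auto. split. apply PosM; auto.
  transitivity (Kmul c3 (Kmul c1 (G D))). ring. rewrite C.
  transitivity (Kmul c2 (Kmul c3 (G E))). ring. rewrite C'. ring.
Qed.
Lemma ARel_ARel D E F : ARel D E -> ARel E F -> Rel D F.
Proof.
  intros [c1 [c2 [A [B C]]]] [c3 [c4 [A' [B' C']]]].
  exists (Kmul c3 c1), (Kmul c2 c4). split. apply PosM; auto. split. apply PosM; auto.
  transitivity (Kmul c3 (Kmul c1 (G D))). ring. rewrite C.
  transitivity (Kopp (Kmul c2 (Kmul c3 (G E)))). ring. rewrite C'. ring.
Qed.

Lemma iso_link D E : iso D E -> (link D <-> link E).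
Proof.
  induction 1.
  - apply iso_step_rel in H. tauto.
  - tauto.
  - tauto.
  - tauto.
Qed.

Lemma equiv5_rel D E : equiv5 D E -> Rel D E.
Proof.
  induction 1 as [x y H | x | x y _ IH | x y z _ IH1 _ IH2].
  - destruct H as [H | [H | H]].
    + apply iso_step_rel in H; tauto.
    + apply (T5_rel Xp) in H; tauto.
    + apply (T5_rel Xn) in H; tauto.
  - apply Rel_refl.
  - apply Rel_sym; auto.
  - eapply Rel_trans; eauto.
Qed.

Lemma one22_rel D E : one22 D E -> ARel D E /\ link D.
Proof.
  intros [E1 [E2 [I1 [I2 H]]]].
  assert (HA : ARel E1 E2 /\ link E1).
  { destruct H as [H | [H | [H | H]]].
    - apply (T52_rel Xp) in H; tauto.
    - apply (T52_rel Xn) in H; tauto.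
    - apply (T52_rel Xp) in H; [|tauto]. split. apply ARel_sym; tauto. tauto.
    - apply (T52_rel Xn) in H; [|tauto]. split. apply ARel_sym; tauto. tauto. }
  destruct HA as [HA L]. split.
  - eapply Rel_ARel. apply iso_rel; eauto. eapply ARel_Rel; eauto. apply iso_rel; auto.
  - apply (iso_link D E1 I1). exact L.
Qed.

Lemma chain_rel n D E : chain22 n D E ->
  (Nat.Even n -> Rel D E) /\ (Nat.Odd n -> ARel D E /\ link D).
Proof.
  induction 1 as [D E H | n D E F H _ [IHe IHo]].
  - split. intros; apply iso_rel; auto. intros [k Hk]; lia.
  - apply one22_rel in H as [HA L]. split.
    + intro Ev. apply Nat.Even_succ in Ev. destruct (IHo Ev) as [A _]. eapply ARel_ARel; eauto.
    + intro Od. apply Nat.Odd_succ in Od. split; auto. eapply ARel_Rel; eauto.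
Qed.


Definition Ksig (x : K) : K :=
  mkK (k0 x - k1 x)%Z (- k1 x)%Z (k3 x - k1 x)%Z (k2 x - k1 x)%Z.
Lemma Ksig_add x y : Ksig (Kadd x y) = Kadd (Ksig x) (Ksig y).
Proof. destruct x as [a0 a1 a2 a3], y as [b0 b1 b2 b3]; unfold Ksig, Kadd; cbn [k0 k1 k2 k3]; f_equal; ring. Qed.
Lemma Ksig_mul x y : Ksig (Kmul x y) = Kmul (Ksig x) (Ksig y).
Proof. destruct x as [a0 a1 a2 a3], y as [b0 b1 b2 b3]; unfold Ksig, Kmul; cbn [k0 k1 k2 k3]; f_equal; ring. Qed.
Lemma Ksig0 : Ksig K0 = K0. Proof. reflexivity. Qed.
Lemma Ksig1 : Ksig K1 = K1. Proof. reflexivity. Qed.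

Lemma zp_mod a : zp a = zp (a mod 5).
Proof. unfold zp. rewrite Z.mod_mod by lia. reflexivity. Qed.
Lemma mod5_cases a : (a mod 5 = 0 \/ a mod 5 = 1 \/ a mod 5 = 2 \/ a mod 5 = 3 \/ a mod 5 = 4)%Z.
Proof. pose proof (Z.mod_pos_bound a 5). lia. Qed.
Lemma zp_add a b : Kmul (zp a) (zp b) = zp (a + b).
Proof.
  rewrite (zp_mod a), (zp_mod b), (zp_mod (a + b)). rewrite Z.add_mod by lia.
  destruct (mod5_cases a) as [-> | [-> | [-> | [-> | ->]]]];
  destruct (mod5_cases b) as [-> | [-> | [-> | [-> | ->]]]]; vm_compute; reflexivity.
Qed.
Lemma zp0 : zp 0 = K1. Proof. reflexivity. Qed.
Lemma zp_5 a k : zp (a + 5 * k) = zp a.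
Proof.
  rewrite (zp_mod (a + 5 * k)), (zp_mod a). f_equal.
  replace (a + 5 * k)%Z with (a + k * 5)%Z by ring. apply Z_mod_plus_full.
Qed.
Lemma Ksig_zp a : Ksig (zp a) = zp (- a).
Proof.
  assert (H1 : Kmul (Ksig (zp a)) (zp a) = K1).
  { rewrite (zp_mod a). destruct (mod5_cases a) as [-> | [-> | [-> | [-> | ->]]]]; vm_compute; reflexivity. }
  assert (H2 : Kmul (zp a) (zp (- a)) = K1).
  { rewrite zp_add. replace (a + - a)%Z with 0%Z by ring. reflexivity. }
  transitivity (Kmul (Ksig (zp a)) (Kmul (zp a) (zp (- a)))). rewrite H2. ring.
  transitivity (Kmul (Kmul (Ksig (zp a)) (zp a)) (zp (- a))). ring. rewrite H1. ring.
Qed.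

Definition upd (r : nat -> nat) (n v : nat) : nat -> nat := fun i => if Nat.eqb i n then v else r i.
Fixpoint psum (n N : nat) (r : nat -> nat) (f : (nat -> nat) -> K) : K :=
  match N with O => f r | S N => sum5 KM (fun v => psum (S n) N (upd r n v) f) end.

Lemma sum5_E (f : nat -> K) : sum5 KM f = Kadd (f 0%nat) (Kadd (f 1%nat) (Kadd (f 2%nat) (Kadd (f 3%nat) (Kadd (f 4%nat) K0)))).
Proof. reflexivity. Qed.
Lemma sum5_ext (f g : nat -> K) : (forall z, (z < 5)%nat -> f z = g z) -> sum5 KM f = sum5 KM g.
Proof. intro E. rewrite !sum5_E. rewrite !E by lia. reflexivity. Qed.
Lemma sum5_rot (F : nat -> K) a : (a < 5)%nat -> sum5 KM (fun v => F ((v + a) mod 5)%nat) = sum5 KM F.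
Proof.
  intro Ha. rewrite !sum5_E.
  assert (a = 0 \/ a = 1 \/ a = 2 \/ a = 3 \/ a = 4)%nat as HH by lia.
  destruct HH as [->|[->|[->|[->| ->]]]]; simpl; ring.
Qed.

Lemma psum_add n N r f g : psum n N r (fun x => Kadd (f x) (g x)) = Kadd (psum n N r f) (psum n N r g).
Proof.
  revert n r; induction N as [|N IH]; intros n r; simpl. reflexivity.
  rewrite !sum5_E, !IH. ring.
Qed.
Lemma psum_scal n N r c f : psum n N r (fun x => Kmul c (f x)) = Kmul c (psum n N r f).
Proof.
  revert n r; induction N as [|N IH]; intros n r; simpl. reflexivity.
  rewrite !sum5_E, !IH. ring.
Qed.
Lemma psum_scal_r n N r c f : psum n N r (fun x => Kmul (f x) c) = Kmul (psum n N r f) c.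
Proof.
  transitivity (psum n N r (fun x => Kmul c (f x))).
  - revert n r; induction N as [|N IH]; intros n r; simpl. ring. rewrite !sum5_E, !IH. reflexivity.
  - rewrite psum_scal. ring.
Qed.
Lemma psum_zero n N r : psum n N r (fun _ => K0) = K0.
Proof.
  revert n r; induction N as [|N IH]; intros n r; simpl. reflexivity.
  rewrite !sum5_E, !IH. ring.
Qed.
Lemma Ksig_psum n N r f : Ksig (psum n N r f) = psum n N r (fun x => Ksig (f x)).
Proof.
  revert n r; induction N as [|N IH]; intros n r; simpl. reflexivity.
  rewrite !sum5_E, !Ksig_add, !IH. reflexivity.
Qed.

Definition Reach (n N : nat) (mu r : nat -> nat) : Prop :=
  (forall i, (i < n \/ n + N <= i)%nat -> r i = mu i) /\ (forall i, (r i < 5)%nat).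

Lemma upd_lt r n v : (forall i, (r i < 5)%nat) -> (v < 5)%nat -> forall i, (upd r n v i < 5)%nat.
Proof. intros H Hv i. unfold upd. destruct (Nat.eqb i n); auto. Qed.

Lemma psum_ext n N mu f g : (forall i, (mu i < 5)%nat) ->
  (forall r, Reach n N mu r -> f r = g r) -> psum n N mu f = psum n N mu g.
Proof.
  revert n mu; induction N as [|N IH]; intros n mu Hmu E; simpl.
  - apply E. split; auto.
  - apply sum5_ext. intros z Hz. apply IH. apply upd_lt; auto.
    intros r [R1 R2]. apply E. split; auto.
    intros i Hi. rewrite R1 by lia. unfold upd. destruct (Nat.eqb_spec i n); auto. lia.
Qed.

Lemma psum_base n N mu mu' f : (forall i, (i < n \/ n + N <= i)%nat -> mu i = mu' i) ->
  psum n N mu f = psum n N mu' f.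
Proof.
  revert n mu mu'; induction N as [|N IH]; intros n mu mu' E; simpl.
  - f_equal. apply functional_extensionality. intro i. apply E. lia.
  - apply sum5_ext. intros z Hz. apply IH. intros i Hi. unfold upd.
    destruct (Nat.eqb_spec i n); auto. apply E. lia.
Qed.

Lemma psum_factor n N mu g f : (forall i, (mu i < 5)%nat) ->
  (forall r, Reach n N mu r -> g r = g mu) ->
  psum n N mu (fun r => Kmul (g r) (f r)) = Kmul (g mu) (psum n N mu f).
Proof.
  intros Hmu E. rewrite <- psum_scal. apply psum_ext; auto. intros r R. rewrite E; auto.
Qed.

Lemma psum_sum5 m M mu (F : nat -> (nat -> nat) -> K) :
  psum m M mu (fun b => sum5 KM (fun v => F v b)) = sum5 KM (fun v => psum m M mu (F v)).
Proof.
  transitivity (psum m M mu (fun b => Kadd (F 0%nat b) (Kadd (F 1%nat b) (Kadd (F 2%nat b)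
     (Kadd (F 3%nat b) (Kadd (F 4%nat b) K0)))))). reflexivity.
  rewrite !psum_add, psum_zero. reflexivity.
Qed.

Lemma psum_swap n N r m M mu (X : (nat -> nat) -> (nat -> nat) -> K) :
  psum n N r (fun a => psum m M mu (fun b => X a b)) = psum m M mu (fun b => psum n N r (fun a => X a b)).
Proof.
  revert n r; induction N as [|N IH]; intros n r; simpl. reflexivity.
  rewrite psum_sum5. apply sum5_ext. intros z _. apply IH.
Qed.

Lemma psum_upd_below n N mu k c f : (k < n)%nat ->
  psum n N mu (fun q => f (upd q k c)) = psum n N (upd mu k c) f.
Proof.
  revert n mu; induction N as [|N IH]; intros n mu Hk; simpl. reflexivity.
  apply sum5_ext. intros z Hz. rewrite IH by lia. f_equal.
  apply functional_extensionality. intro i. unfold upd.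
  destruct (Nat.eqb_spec i k), (Nat.eqb_spec i n); subst; auto. lia.
Qed.

Definition tr (r h : nat -> nat) : nat -> nat := fun i => ((r i + h i) mod 5)%nat.

Lemma psum_trans N n mu h f : (forall i, (mu i < 5)%nat) -> (forall i, (h i < 5)%nat) ->
  (forall i, (i < n)%nat -> h i = 0%nat) ->
  psum n N mu (fun r => f (tr r h)) = psum n N (tr mu h) f.
Proof.
  revert n mu h f; induction N as [|N IH]; intros n mu h f Hmu Hh H0; simpl. reflexivity.
  transitivity (sum5 KM (fun v => psum (S n) N (upd (tr mu h) n ((v + h n) mod 5)) f)).
  2:{ apply (sum5_rot (fun v => psum (S n) N (upd (tr mu h) n v) f)). auto. }
  apply sum5_ext. intros v Hv.
  set (h' := upd h n 0).
  set (g := fun q => f (upd q n ((v + h n) mod 5))).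
  transitivity (psum (S n) N (upd mu n v) (fun r => g (tr r h'))).
  { apply psum_ext. apply upd_lt; auto. intros r [R1 R2]. unfold g. f_equal.
    apply functional_extensionality. intro i. unfold upd, tr, h'.
    destruct (Nat.eqb_spec i n). subst. rewrite R1 by lia. unfold upd. rewrite Nat.eqb_refl. reflexivity.
    unfold upd. destruct (Nat.eqb_spec i n); [lia|reflexivity]. }
  rewrite IH.
  - unfold g. rewrite psum_upd_below by lia. apply psum_base. intros i _.
    unfold upd, tr, h'. destruct (Nat.eqb_spec i n); auto. unfold upd. destruct (Nat.eqb_spec i n); [lia|reflexivity].
  - apply upd_lt; auto.
  - intro i; unfold h', upd. destruct (Nat.eqb i n); auto. lia.
  - intros i Hi. unfold h', upd. destruct (Nat.eqb_spec i n); auto. apply H0. lia.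
Qed.

Definition KN (m : nat) : K := mkK (Z.of_nat m) 0 0 0.
Fixpoint fv (n N : nat) (mu : nat -> nat) : nat -> nat :=
  match N with O => mu | S N => fv (S n) N (upd mu n 0) end.
Lemma psum_nat n N mu f : (forall i, (mu i < 5)%nat) ->
  (forall r, Reach n N mu r -> exists m, f r = KN m) ->
  exists m, psum n N mu f = KN m /\ (forall m0, f (fv n N mu) = KN m0 -> (m0 <= m)%nat).
Proof.
  revert n mu; induction N as [|N IH]; intros n mu Hmu E; simpl.
  - destruct (E mu) as [m Hm]. split; auto. exists m. split; auto. intros m0 H.
    rewrite Hm in H. unfold KN in H. injection H. lia.
  - assert (Hs : forall v, (v < 5)%nat -> exists m, psum (S n) N (upd mu n v) f = KN m /\
                  (forall m0, f (fv (S n) N (upd mu n v)) = KN m0 -> (m0 <= m)%nat)).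
    { intros v Hv. apply IH. apply upd_lt; auto.
      intros r [R1 R2]. apply E. split; auto. intros i Hi. rewrite R1 by lia. unfold upd.
      destruct (Nat.eqb_spec i n); auto. lia. }
    destruct (Hs 0%nat) as [m0 [A0 B0]]; [lia|].
    destruct (Hs 1%nat) as [m1 [A1 _]]; [lia|].
    destruct (Hs 2%nat) as [m2 [A2 _]]; [lia|].
    destruct (Hs 3%nat) as [m3 [A3 _]]; [lia|].
    destruct (Hs 4%nat) as [m4 [A4 _]]; [lia|].
    exists (m0 + m1 + m2 + m3 + m4)%nat. split.
    + rewrite sum5_E, A0, A1, A2, A3, A4. unfold KN, Kadd, K0; cbn [k0 k1 k2 k3]. f_equal; lia.
    + intros m' H. specialize (B0 m' H). lia.
Qed.
Definition rho0 : nat -> nat := fun _ => 0%nat.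
Lemma fv_rho0 n N : fv n N rho0 = rho0.
Proof.
  revert n; induction N as [|N IH]; intro n; simpl. reflexivity.
  replace (upd rho0 n 0) with rho0. apply IH.
  apply functional_extensionality. intro i. unfold upd, rho0. destruct (Nat.eqb i n); auto.
Qed.

(* ===== compilation of a diagram into a Gauss sum ===== *)
Definition cw (C : list (nat * nat)) (r : nat -> nat) : K :=
  fold_right (fun p acc => Kmul (if Nat.eqb (r (fst p)) (r (snd p)) then K1 else K0) acc) K1 C.
Definition tv (t : Z * nat * nat) (r : nat -> nat) : Z :=
  let '(e, a, b) := t in (e * (Z.of_nat (r a) - Z.of_nat (r b)) * (Z.of_nat (r a) - Z.of_nat (r b)))%Z.
Definition qv (T : list (Z * nat * nat)) (r : nat -> nat) : Z :=
  fold_right (fun t acc => (tv t r + acc)%Z) 0%Z T.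
Definition W (C : list (nat * nat)) (T : list (Z * nat * nat)) (r : nat -> nat) : K :=
  Kmul (cw C r) (zp (qv T r)).

Fixpoint comp (d : diagram) (sym : list nat) (n : nat) : nat * list (nat * nat) * list (Z * nat * nat) :=
  match d with
  | [] => (0%nat, [], [])
  | sl :: d =>
    let j := Nat.div2 (pos sl) in
    match el sl, Nat.odd (pos sl) with
    | Cup, false => let '(N, C, T) := comp d (ins_at j n sym) (S n) in (S N, C, T)
    | Cup, true => comp d (ins_at (S j) (nth j sym 0%nat) sym) n
    | Cap, false => comp d (rem_at j sym) n
    | Cap, true => let '(N, C, T) := comp d (rem_at (S j) sym) n in
                   (N, (nth j sym 0%nat, nth (S j) sym 0%nat) :: C, T)
    | e, false => let '(N, C, T) := comp d (set_at j n sym) (S n) in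
                  (S N, C, (eta e false, nth j sym 0%nat, n) :: T)
    | e, true => let '(N, C, T) := comp d sym n in
                 (N, C, (eta e true, nth j sym 0%nat, nth (S j) sym 0%nat) :: T)
    end
  end.

Lemma map_ins (f : nat -> nat) j x s : (j <= length s)%nat -> map f (ins_at j x s) = ins_at j (f x) (map f s).
Proof. revert j; induction s as [|y s IH]; intros [|j] H; simpl in *; auto; try lia. rewrite IH; auto; lia. Qed.
Lemma map_rem (f : nat -> nat) j s : map f (rem_at j s) = rem_at j (map f s).
Proof. revert j; induction s as [|y s IH]; intros [|j]; simpl; auto. rewrite IH; auto. Qed.
Lemma map_set (f : nat -> nat) j x s : map f (set_at j x s) = set_at j (f x) (map f s).
Proof. revert j; induction s as [|y s IH]; intros [|j]; simpl; auto. rewrite IH; auto. Qed.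
Lemma nth_map' (f : nat -> nat) j s : (j < length s)%nat -> nth j (map f s) 0%nat = f (nth j s 0%nat).
Proof. intro H. rewrite nth_indep with (d' := f 0%nat) by (rewrite length_map; auto). apply map_nth. Qed.
Lemma in_ins x j y s : In x (ins_at j y s) -> x = y \/ In x s.
Proof. revert j; induction s as [|z s IH]; intros [|j]; simpl; intuition. apply IH in H0. tauto. Qed.
Lemma in_rem x j s : In x (rem_at j s) -> In x s.
Proof. revert j; induction s as [|z s IH]; intros [|j]; simpl; intuition. apply IH in H0. tauto. Qed.
Lemma in_set x j y s : In x (set_at j y s) -> x = y \/ In x s.
Proof. revert j; induction s as [|z s IH]; intros [|j]; simpl; intuition. apply IH in H0. tauto. Qed.

Lemma W_cons_T C t T r : W C (t :: T) r = Kmul (zp (tv t r)) (W C T r).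
Proof. unfold W, qv. simpl. rewrite <- zp_add. ring. Qed.
Lemma W_cons_C a b C T r : W ((a, b) :: C) T r = Kmul (if Nat.eqb (r a) (r b) then K1 else K0) (W C T r).
Proof. unfold W, cw. simpl. ring. Qed.

Lemma Kmul1l (x : K) : Kmul K1 x = x. Proof. ring. Qed.
Lemma Kmul0l (x : K) : Kmul K0 x = K0. Proof. ring. Qed.

Lemma comp_ok d : forall sym n mu, tangle (2 * length sym) d 0 ->
  (forall x, In x sym -> (x < n)%nat) -> (forall i, (mu i < 5)%nat) ->
  let '(N, C, T) := comp d sym n in Ev KM d (fun _ => K1) (map mu sym) = psum n N mu (W C T).
Proof.
  induction d as [|[k e] d IH]; intros sym n mu Tg Hs Hmu.
  - simpl. reflexivity.
  - destruct Tg as [T1 T2]. cbn [pos el] in T1, T2.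
    destruct (slice_ok 0 k e (length sym) ltac:(lia)) as [A B].
    rewrite Nat.sub_0_r in A, B. rewrite Nat.add_0_l in B. rewrite B in T2.
    change (Ev KM (Sl k e :: d) (fun _ => K1) (map mu sym)) with
      (stepj KM (Nat.div2 k) (Nat.odd k) e (Ev KM d (fun _ => K1)) (map mu sym)).
    unfold comp; fold comp. cbn [pos el].
    set (j := Nat.div2 k) in *. unfold touchok, newlen in *.
    destruct e, (Nat.odd k); rewrite ?Nat.leb_le, ?Nat.ltb_lt in A; unfold stepj.
    +
      specialize (IH (ins_at (S j) (nth j sym 0%nat) sym) n mu).
      destruct (comp d _ n) as [[N C] T].
      rewrite <- IH; auto.
      * rewrite map_ins by lia. rewrite nth_map' by lia. reflexivity.
      * rewrite ins_len by lia. exact T2.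
      * intros x Hx. apply in_ins in Hx as [-> | Hx]; auto. apply Hs, nth_In. lia.
    +
      specialize (fun z => IH (ins_at j n sym) (S n) (upd mu n z)).
      destruct (comp d _ (S n)) as [[N C] T]. simpl psum.
      apply sum5_ext. intros z Hz. rewrite <- IH; auto.
      * rewrite map_ins by lia. f_equal. f_equal.
        -- unfold upd. rewrite Nat.eqb_refl. reflexivity.
        -- apply map_ext_in. intros x Hx. unfold upd. specialize (Hs x Hx).
           destruct (Nat.eqb_spec x n); auto. lia.
      * rewrite ins_len by lia. exact T2.
      * intros x Hx. apply in_ins in Hx as [-> | Hx]; auto. specialize (Hs x Hx). lia.
      * apply upd_lt; auto.
    +
      specialize (IH (rem_at (S j) sym) n mu).
      destruct (comp d _ n) as [[N C] T].
      transitivity (psum n N mu (fun r => Kmul (if Nat.eqb (r (nth j sym 0%nat)) (r (nth (S j) sym 0%nat)) then K1 else K0) (W C T r))).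
      2:{ apply psum_ext; auto. intros r _. symmetry. apply W_cons_C. }
      rewrite psum_factor; auto.
      * rewrite !nth_map' by lia. destruct (Nat.eqb _ _).
        -- rewrite <- IH; auto. rewrite map_rem. symmetry. apply Kmul1l.
           rewrite rem_len by lia. exact T2.
           intros x Hx. apply Hs. eapply in_rem; eauto.
        -- symmetry. apply Kmul0l.
      * intros r [R1 _]. rewrite !R1; auto; left; apply Hs, nth_In; lia.
    +
      specialize (IH (rem_at j sym) n mu).
      destruct (comp d _ n) as [[N C] T].
      rewrite <- IH; auto.
      * rewrite map_rem. reflexivity.
      * rewrite rem_len by lia. exact T2.
      * intros x Hx. apply Hs. eapply in_rem; eauto.
    + specialize (IH sym n mu).
      destruct (comp d sym n) as [[N C] T].
      transitivity (psum n N mu (fun r => Kmul (zp (tv (eta Xp true, nth j sym 0%nat, nth (S j) sym 0%nat) r)) (W C T r))).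
      2:{ apply psum_ext; auto. intros r _. symmetry. apply W_cons_T. }
      rewrite psum_factor; auto.
      * rewrite <- IH; auto. rewrite !nth_map' by lia. reflexivity.
      * intros r [R1 _]. unfold tv. rewrite !R1; auto; left; apply Hs, nth_In; lia.
    + specialize (fun z => IH (set_at j n sym) (S n) (upd mu n z)).
      destruct (comp d _ (S n)) as [[N C] T]. simpl psum.
      apply sum5_ext. intros z Hz.
      assert (Ha : (nth j sym 0%nat < n)%nat) by (apply Hs, nth_In; lia).
      transitivity (psum (S n) N (upd mu n z) (fun r => Kmul (zp (tv (eta Xp false, nth j sym 0%nat, n) r)) (W C T r))).
      2:{ apply psum_ext. apply upd_lt; auto. intros r _. symmetry. apply W_cons_T. }
      rewrite psum_factor.
      * rewrite <- IH; auto.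
        -- rewrite map_set. rewrite nth_map' by lia. unfold tv, upd. rewrite Nat.eqb_refl.
           destruct (Nat.eqb_spec (nth j sym 0%nat) n); [lia|].
           replace (map (fun i => if Nat.eqb i n then z else mu i) sym) with (map mu sym). reflexivity.
           apply map_ext_in. intros x Hx. specialize (Hs x Hx). destruct (Nat.eqb_spec x n); auto. lia.
        -- rewrite set_len. exact T2.
        -- intros x Hx. apply in_set in Hx as [-> | Hx]; auto. specialize (Hs x Hx). lia.
        -- apply upd_lt; auto.
      * apply upd_lt; auto.
      * intros r [R1 _]. unfold tv. rewrite !R1; auto; left; lia.
    + specialize (IH sym n mu).
      destruct (comp d sym n) as [[N C] T].
      transitivity (psum n N mu (fun r => Kmul (zp (tv (eta Xn true, nth j sym 0%nat, nth (S j) sym 0%nat) r)) (W C T r))).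
      2:{ apply psum_ext; auto. intros r _. symmetry. apply W_cons_T. }
      rewrite psum_factor; auto.
      * rewrite <- IH; auto. rewrite !nth_map' by lia. reflexivity.
      * intros r [R1 _]. unfold tv. rewrite !R1; auto; left; apply Hs, nth_In; lia.
    + specialize (fun z => IH (set_at j n sym) (S n) (upd mu n z)).
      destruct (comp d _ (S n)) as [[N C] T]. simpl psum.
      apply sum5_ext. intros z Hz.
      assert (Ha : (nth j sym 0%nat < n)%nat) by (apply Hs, nth_In; lia).
      transitivity (psum (S n) N (upd mu n z) (fun r => Kmul (zp (tv (eta Xn false, nth j sym 0%nat, n) r)) (W C T r))).
      2:{ apply psum_ext. apply upd_lt; auto. intros r _. symmetry. apply W_cons_T. }
      rewrite psum_factor.
      * rewrite <- IH; auto.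
        -- rewrite map_set. rewrite nth_map' by lia. unfold tv, upd. rewrite Nat.eqb_refl.
           destruct (Nat.eqb_spec (nth j sym 0%nat) n); [lia|].
           replace (map (fun i => if Nat.eqb i n then z else mu i) sym) with (map mu sym). reflexivity.
           apply map_ext_in. intros x Hx. specialize (Hs x Hx). destruct (Nat.eqb_spec x n); auto. lia.
        -- rewrite set_len. exact T2.
        -- intros x Hx. apply in_set in Hx as [-> | Hx]; auto. specialize (Hs x Hx). lia.
        -- apply upd_lt; auto.
      * apply upd_lt; auto.
      * intros r [R1 _]. unfold tv. rewrite !R1; auto; left; lia.
Qed.

(* ===== the Gauss sum does not vanish ===== *)
Definition Sat (C : list (nat * nat)) (r : nat -> nat) : Prop := forall p, In p C -> r (fst p) = r (snd p).
Lemma cw_spec C r : (Sat C r /\ cw C r = K1) \/ (~ Sat C r /\ cw C r = K0).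
Proof.
  induction C as [|[a b] C IH]; simpl.
  - left. split; [intros p []|reflexivity].
  - destruct (Nat.eqb_spec (r a) (r b)) as [E|E].
    + destruct IH as [[S1 S2]|[S1 S2]]; rewrite S2.
      * left. split; [|ring]. intros p [<-|Hp]; auto.
      * right. split; [|ring]. intros HS. apply S1. intros p Hp. apply HS. simpl; auto.
    + right. split; [|ring]. intros HS. apply E. apply (HS (a, b)). simpl; auto.
Qed.
Lemma cw_sat C r : Sat C r -> cw C r = K1.
Proof. intro H. destruct (cw_spec C r) as [[_ E]|[N _]]; auto. contradiction. Qed.
Lemma cw_nsat C r : ~ Sat C r -> cw C r = K0.
Proof. intro H. destruct (cw_spec C r) as [[S _]|[_ E]]; auto. contradiction. Qed.
Lemma Ksig_cw C r : Ksig (cw C r) = cw C r.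
Proof. destruct (cw_spec C r) as [[_ E]|[_ E]]; rewrite E; reflexivity. Qed.

Lemma tr_comm r h : tr r h = tr h r.
Proof. apply functional_extensionality. intro i. unfold tr. f_equal. lia. Qed.
Lemma mod5_cancel a b c : (a < 5)%nat -> (b < 5)%nat -> ((a + c) mod 5 = (b + c) mod 5)%nat -> a = b.
Proof.
  intros Ha Hb E. assert (c mod 5 < 5)%nat by (apply Nat.mod_upper_bound; lia).
  rewrite (Nat.Div0.add_mod a), (Nat.Div0.add_mod b) in E by lia.
  rewrite (Nat.mod_small a), (Nat.mod_small b) in E by lia.
  remember (c mod 5)%nat as c'.
  assert (c' = 0 \/ c' = 1 \/ c' = 2 \/ c' = 3 \/ c' = 4)%nat as HH by lia.
  assert (a = 0 \/ a = 1 \/ a = 2 \/ a = 3 \/ a = 4)%nat as Ha' by lia.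
  assert (b = 0 \/ b = 1 \/ b = 2 \/ b = 3 \/ b = 4)%nat as Hb' by lia.
  destruct HH as [->|[->|[->|[->| ->]]]]; destruct Ha' as [->|[->|[->|[->| ->]]]];
  destruct Hb' as [->|[->|[->|[->| ->]]]]; simpl in E; try lia.
Qed.
Lemma Sat_tr C r h : (forall i, (r i < 5)%nat) -> (forall i, (h i < 5)%nat) -> Sat C r ->
  (Sat C (tr h r) <-> Sat C h).
Proof.
  intros Hr Hh S. split.
  - intros S' p Hp. specialize (S p Hp). specialize (S' p Hp). unfold tr in S'. rewrite S in S'.
    eapply mod5_cancel; eauto.
  - intros S' p Hp. specialize (S p Hp). specialize (S' p Hp). unfold tr. rewrite S, S'. reflexivity.
Qed.

Definition bt (t : Z * nat * nat) (h r : nat -> nat) : Z :=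
  let '(e, a, b) := t in (e * (Z.of_nat (h a) - Z.of_nat (h b)) * (Z.of_nat (r a) - Z.of_nat (r b)))%Z.
Definition Bv (T : list (Z * nat * nat)) (h r : nat -> nat) : Z :=
  fold_right (fun t acc => (bt t h r + acc)%Z) 0%Z T.

Lemma tr_Z r h i : Z.of_nat (tr r h i) = (Z.of_nat (r i) + Z.of_nat (h i) - 5 * Z.of_nat ((r i + h i) / 5))%Z.
Proof.
  unfold tr. pose proof (Nat.div_mod_eq (r i + h i) 5) as E. lia.
Qed.

Lemma qv_cons t T r : qv (t :: T) r = (tv t r + qv T r)%Z. Proof. reflexivity. Qed.
Lemma Bv_cons t T h r : Bv (t :: T) h r = (bt t h r + Bv T h r)%Z. Proof. reflexivity. Qed.
Lemma qv_tr T h r : exists k, qv T (tr h r) = (qv T h + 2 * Bv T h r + qv T r + 5 * k)%Z.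
Proof.
  induction T as [|[[e a] b] T [k IH]].
  - exists 0%Z. reflexivity.
  - rewrite !qv_cons, !Bv_cons, IH. unfold tv, bt. rewrite !tr_Z.
    set (qa := Z.of_nat ((h a + r a) / 5)). set (qb := Z.of_nat ((h b + r b) / 5)).
    set (ha := Z.of_nat (h a)). set (hb := Z.of_nat (h b)).
    set (ra := Z.of_nat (r a)). set (rb := Z.of_nat (r b)).
    exists (k + e * (qa - qb) * (5 * (qa - qb) - 2 * ((ha - hb) + (ra - rb))))%Z. ring.
Qed.

Lemma Bv_tr T h r1 r2 : exists k, Bv T h (tr r1 r2) = (Bv T h r1 + Bv T h r2 + 5 * k)%Z.
Proof.
  induction T as [|[[e a] b] T [k IH]].
  - exists 0%Z. reflexivity.
  - rewrite !Bv_cons, IH. unfold bt. rewrite !tr_Z.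
    set (qa := Z.of_nat ((r1 a + r2 a) / 5)). set (qb := Z.of_nat ((r1 b + r2 b) / 5)).
    exists (k - e * (Z.of_nat (h a) - Z.of_nat (h b)) * (qa - qb))%Z. ring.
Qed.

Lemma Bv_diag T h : Bv T h h = qv T h.
Proof. induction T as [|[[e a] b] T IH]; [reflexivity|]. rewrite Bv_cons, qv_cons, IH. reflexivity. Qed.
Lemma Bv_rho0 T r : Bv T rho0 r = 0%Z.
Proof. induction T as [|[[e a] b] T IH]; [reflexivity|]. rewrite Bv_cons, IH. unfold bt, rho0. simpl. ring. Qed.

Definition om (j : nat) : K := Ksub K1 (Kpow zeta j).
Definition Pk (c : Z) : K :=
  match c with
  | 1%Z => Kmul (om 2) (Kmul (om 3) (om 4))
  | 2%Z => Kmul (om 1) (Kmul (om 3) (om 4))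
  | 3%Z => Kmul (om 1) (Kmul (om 2) (om 4))
  | _ => Kmul (om 1) (Kmul (om 2) (om 3))
  end.
Lemma zp_kill x c : (c mod 5 <> 0)%Z -> x = Kmul (zp c) x -> x = K0.
Proof.
  intros Hc E. rewrite zp_mod in E.
  assert (Hx : Kmul (Ksub K1 (zp (c mod 5))) x = K0).
  { unfold Ksub. transitivity (Kadd x (Kopp (Kmul (zp (c mod 5)) x))). ring. rewrite <- E. ring. }
  assert (H5 : Kmul (KN 5) x = K0).
  { assert (P : Kmul (Pk (c mod 5)) (Ksub K1 (zp (c mod 5))) = KN 5).
    { destruct (mod5_cases c) as [E' | [E' | [E' | [E' | E']]]]; rewrite E'; [lia| | | |];
      vm_compute; reflexivity. }
    rewrite <- P. transitivity (Kmul (Pk (c mod 5)) (Kmul (Ksub K1 (zp (c mod 5))) x)). ring.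
    rewrite Hx. ring. }
  destruct x as [a0 a1 a2 a3]. unfold KN, Kmul in H5.
  pose proof (f_equal k0 H5) as E0. pose proof (f_equal k1 H5) as E1.
  pose proof (f_equal k2 H5) as E2. pose proof (f_equal k3 H5) as E3.
  cbn [k0 k1 k2 k3 K0] in E0, E1, E2, E3. unfold K0. f_equal; lia.
Qed.

Lemma mod_2x (x : Z) : ((2 * x) mod 5 = 0 -> x mod 5 = 0)%Z.
Proof. intro H. Z.div_mod_to_equations. lia. Qed.

Lemma tr_rho0 r : (forall i, (r i < 5)%nat) -> tr rho0 r = r.
Proof. intro H. apply functional_extensionality. intro i. unfold tr, rho0. rewrite Nat.add_0_l. apply Nat.mod_small, H. Qed.

Lemma S_shift N r F : Reach 0 N rho0 r ->
  psum 0 N rho0 (fun h => F (tr h r)) = psum 0 N rho0 F.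
Proof.
  intros [R1 R2]. rewrite psum_trans; auto.
  - rewrite tr_rho0 by auto. apply psum_base. intros i Hi. apply R1. lia.
  - intro; unfold rho0; lia.
Qed.

Lemma Sat_rho0 C : Sat C rho0.
Proof. intros p _. reflexivity. Qed.

Lemma zp_2B T h r1 r2 : exists k, Bv T h (tr r1 r2) = (Bv T h r1 + Bv T h r2 + 5 * k)%Z.
Proof. apply Bv_tr. Qed.

Lemma pointwise C T h r : (forall i, (h i < 5)%nat) -> (forall i, (r i < 5)%nat) ->
  Kmul (W C T (tr h r)) (Ksig (W C T r)) =
  Kmul (Kmul (cw C h) (zp (qv T h))) (Kmul (cw C r) (zp (2 * Bv T h r))).
Proof.
  intros Hh Hr. unfold W. rewrite Ksig_mul, Ksig_cw, Ksig_zp.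
  destruct (cw_spec C r) as [[Sr Er]|[Sr Er]]; rewrite Er.
  - assert (Ec : cw C (tr h r) = cw C h).
    { destruct (cw_spec C h) as [[Sh Eh]|[Sh Eh]]; rewrite Eh.
      - apply cw_sat. apply (Sat_tr C r h); auto.
      - apply cw_nsat. intro HS. apply Sh. apply (Sat_tr C r h); auto. }
    rewrite Ec. destruct (qv_tr T h r) as [k Hk]. rewrite Hk.
    transitivity (Kmul (cw C h) (Kmul (zp (qv T h + 2 * Bv T h r + qv T r + 5 * k)) (zp (- qv T r)))). ring.
    rewrite zp_add.
    replace (qv T h + 2 * Bv T h r + qv T r + 5 * k + - qv T r)%Z with ((qv T h + 2 * Bv T h r) + 5 * k)%Z by ring.
    rewrite zp_5, <- zp_add. ring.
  - ring.
Qed.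

Definition Ih (C : list (nat * nat)) (T : list (Z * nat * nat)) (N : nat) (h : nat -> nat) : K :=
  psum 0 N rho0 (fun r => Kmul (cw C r) (zp (2 * Bv T h r))).

Lemma I_zero C T N h r1 : Reach 0 N rho0 r1 -> Sat C r1 -> ((2 * Bv T h r1) mod 5 <> 0)%Z -> Ih C T N h = K0.
Proof.
  intros R1 S1 Hc. unfold Ih. apply (zp_kill _ (2 * Bv T h r1)); auto.
  rewrite <- psum_scal. rewrite <- (S_shift N r1) by exact R1.
  apply psum_ext. intro; unfold rho0; lia.
  intros r [_ Hr]. destruct R1 as [_ Hr1].
  assert (Ec : cw C (tr r r1) = cw C r).
  { destruct (cw_spec C r) as [[Sh Eh]|[Sh Eh]]; rewrite Eh.
    - apply cw_sat. apply (Sat_tr C r1 r); auto.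
    - apply cw_nsat. intro HS. apply Sh. apply (Sat_tr C r1 r); auto. }
  rewrite Ec. destruct (Bv_tr T h r r1) as [k Hk]. rewrite Hk.
  replace (2 * (Bv T h r + Bv T h r1 + 5 * k))%Z with ((2 * Bv T h r + 2 * Bv T h r1) + 5 * (2 * k))%Z by ring.
  rewrite zp_5, <- zp_add. ring.
Qed.

Lemma I_count C T N h : (forall r1, Reach 0 N rho0 r1 -> Sat C r1 -> ((2 * Bv T h r1) mod 5 = 0)%Z) ->
  exists m, (1 <= m)%nat /\ Ih C T N h = KN m.
Proof.
  intro Hall. unfold Ih.
  rewrite (psum_ext 0 N rho0 _ (cw C)).
  - destruct (psum_nat 0 N rho0 (cw C)) as [m [A B]].
    + intro; unfold rho0; lia.
    + intros r _. destruct (cw_spec C r) as [[_ E]|[_ E]]; rewrite E; [exists 1%nat | exists 0%nat]; reflexivity.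
    + exists m. split; auto. apply B. rewrite fv_rho0. rewrite cw_sat by apply Sat_rho0. reflexivity.
  - intro; unfold rho0; lia.
  - intros r R. destruct (cw_spec C r) as [[Sr E]|[Sr E]]; rewrite E.
    + rewrite zp_mod, (Hall r R Sr). reflexivity.
    + ring.
Qed.

Lemma summand_nat C T N h : Reach 0 N rho0 h ->
  exists m, Kmul (Kmul (cw C h) (zp (qv T h))) (Ih C T N h) = KN m /\ (h = rho0 -> (1 <= m)%nat).
Proof.
  intro Rh.
  destruct (Classical_Prop.classic (exists r1, Reach 0 N rho0 r1 /\ Sat C r1 /\ ((2 * Bv T h r1) mod 5 <> 0)%Z))
    as [[r1 [R1 [S1 Hc]]] | Hn].
  - exists 0%nat. split.
    + rewrite (I_zero C T N h r1); auto. change (KN 0) with K0. ring.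
    + intros ->. rewrite Bv_rho0 in Hc. exfalso. apply Hc. reflexivity.
  - assert (Hall : forall r1, Reach 0 N rho0 r1 -> Sat C r1 -> ((2 * Bv T h r1) mod 5 = 0)%Z).
    { intros r1 R1 S1. destruct (Z.eq_dec ((2 * Bv T h r1) mod 5) 0); auto. exfalso. apply Hn. eauto. }
    destruct (I_count C T N h Hall) as [m [Hm E]]. rewrite E.
    destruct (cw_spec C h) as [[Sh Eh]|[Sh Eh]]; rewrite Eh.
    + exists m. split; auto.
      assert (Hq : (qv T h mod 5 = 0)%Z).
      { rewrite <- Bv_diag. apply mod_2x. apply Hall; auto. }
      rewrite zp_mod, Hq. change (zp 0) with K1. ring.
    + exists 0%nat. split. change (KN 0) with K0. ring. intros ->. exfalso. apply Sh, Sat_rho0.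
Qed.

Lemma Reach_rho0 N : Reach 0 N rho0 rho0.
Proof. split; auto. intro; unfold rho0; lia. Qed.

Theorem gauss_nz C T N : exists m, (1 <= m)%nat /\
  Kmul (psum 0 N rho0 (W C T)) (Ksig (psum 0 N rho0 (W C T))) = KN m.
Proof.
  set (S := psum 0 N rho0 (W C T)).
  assert (Hr0 : forall i, (rho0 i < 5)%nat) by (intro; unfold rho0; lia).
  assert (E1 : Kmul S (Ksig S) = psum 0 N rho0 (fun h => Kmul (Kmul (cw C h) (zp (qv T h))) (Ih C T N h))).
  { unfold S at 2. rewrite Ksig_psum. rewrite <- psum_scal.
    transitivity (psum 0 N rho0 (fun r => psum 0 N rho0 (fun h => Kmul (W C T (tr h r)) (Ksig (W C T r))))).
    { apply psum_ext; auto. intros r R. unfold S. rewrite <- (S_shift N r (W C T)) by exact R.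
      rewrite <- psum_scal_r. reflexivity. }
    rewrite psum_swap. apply psum_ext; auto. intros h Rh. unfold Ih. rewrite <- psum_scal.
    apply psum_ext; auto. intros r Rr. apply pointwise; [apply Rh | apply Rr]. }
  rewrite E1.
  destruct (psum_nat 0 N rho0 (fun h => Kmul (Kmul (cw C h) (zp (qv T h))) (Ih C T N h))) as [m [A B]]; auto.
  - intros h Rh. destruct (summand_nat C T N h Rh) as [m [E _]]. eauto.
  - exists m. split; auto.
    destruct (summand_nat C T N rho0 (Reach_rho0 N)) as [m0 [E0 H0]].
    specialize (H0 eq_refl). rewrite fv_rho0 in B. specialize (B m0 E0). lia.
Qed.

Theorem G_nonzero L : link L -> exists m, (1 <= m)%nat /\ Kmul (G L) (Ksig (G L)) = KN m.
Proof.
  intro HL. pose proof (comp_ok L [] 0 rho0 HL) as H.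
  destruct (comp L [] 0) as [[N C] T].
  unfold G. simpl in H. rewrite H; auto.
  - apply gauss_nz.
  - intros x [].
  - intro; unfold rho0; lia.
Qed.

Lemma Pos_form c : Pos c -> exists a b : Z, (0 <= a /\ 0 <= b /\ 0 < a + b)%Z /\
  c = mkK (a - b) 0 (-2 * b) (-2 * b).
Proof.
  intros [n ->]. induction n as [|n [a [b [H E]]]].
  - exists 1%Z, 0%Z. split. lia. reflexivity.
  - exists (5 * b)%Z, a. split. lia. simpl Kpow. rewrite E.
    replace r5 with (mkK (-1) 0 (-2) (-2)) by (vm_compute; reflexivity). unfold Kmul; cbn [k0 k1 k2 k3].
    f_equal; ring.
Qed.

Theorem part1 L L' : ARel L L' -> Rel L L' -> link L -> False.
Proof.
  intros [c1 [c2 [P1 [P2 E1]]]] [c3 [c4 [P3 [P4 E2]]]] HL.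
  assert (Z0 : Kmul (Kadd (Kmul c4 c1) (Kmul c2 c3)) (G L) = K0).
  { transitivity (Kadd (Kmul c4 (Kmul c1 (G L))) (Kmul c2 (Kmul c3 (G L)))). ring.
    rewrite E1, E2. ring. }
  destruct (G_nonzero L HL) as [m [Hm Em]].
  assert (Z1 : Kmul (Kadd (Kmul c4 c1) (Kmul c2 c3)) (KN m) = K0).
  { rewrite <- Em. transitivity (Kmul (Kmul (Kadd (Kmul c4 c1) (Kmul c2 c3)) (G L)) (Ksig (G L))). ring.
    rewrite Z0. ring. }
  destruct (Pos_form _ (PosM _ _ P4 P1)) as [a1 [b1 [H1 F1]]].
  destruct (Pos_form _ (PosM _ _ P2 P3)) as [a2 [b2 [H2 F2]]].
  rewrite F1, F2 in Z1. unfold KN, Kmul, Kadd in Z1.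
  pose proof (f_equal k0 Z1) as G0. pose proof (f_equal k2 Z1) as G2.
  cbn [k0 k1 k2 k3 K0] in G0, G2. nia.
Qed.

Open Scope R_scope.

Lemma cos25 : let x := 2 * cos (2 * PI / 5) in x * x + x - 1 = 0.
Proof.
  intro x. set (c := cos (2 * PI / 5)). set (s := sin (2 * PI / 5)).
  assert (H1 : cos (2 * (2 * PI / 5)) = 2 * c * c - 1) by (rewrite cos_2a_cos; unfold c; ring).
  assert (H2 : sin (2 * (2 * PI / 5)) = 2 * s * c) by (rewrite sin_2a; unfold s, c; ring).
  assert (H3 : s * s = 1 - c * c) by (pose proof (sin2_cos2 (2 * PI / 5)) as E; unfold Rsqr in E; unfold s, c; lra).
  assert (H4 : cos (2 * PI / 5 + 2 * (2 * PI / 5)) = c * (2 * c * c - 1) - s * (2 * s * c))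
    by (rewrite cos_plus, H1, H2; unfold c, s; ring).
  assert (H5 : cos (2 * PI / 5 + 2 * (2 * PI / 5)) = cos (2 * (2 * PI / 5))).
  { replace (2 * PI / 5 + 2 * (2 * PI / 5)) with (2 * PI - 2 * (2 * PI / 5)) by field.
    rewrite cos_minus, cos_2PI, sin_2PI. ring. }
  assert (Hc : c < 1).
  { unfold c. rewrite <- cos_0. apply cos_decreasing_1; pose proof PI_RGT_0; lra. }
  assert (E : (c - 1) * (4 * c * c + 2 * c - 1) = 0).
  { rewrite H4, H1 in H5. replace ((c - 1) * (4 * c * c + 2 * c - 1)) with
      (c * (2 * c * c - 1) - 2 * c * (s * s) - (2 * c * c - 1)) by (rewrite H3; ring). lra. }
  apply Rmult_integral in E. destruct E as [E | E]. lra.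
  unfold x. fold c. lra.
Qed.

Lemma repeat_snoc {X} (a : X) n : repeat a (S n) = repeat a n ++ [a].
Proof. induction n as [|n IH]; simpl; auto. rewrite <- IH. reflexivity. Qed.

Lemma tangle_rep c k w m : (c = Xp \/ c = Xn) -> (k + 2 <= w)%nat -> tangle w (repeat (Sl k c) m) w.
Proof.
  intros Hc Hk. induction m as [|m IH]; simpl; auto.
  destruct Hc as [-> | ->]; simpl; split; try lia; replace (w - 2 + 2)%nat with w by lia; exact IH.
Qed.

Lemma iso1 D E : iso_step D E -> iso D E.
Proof. intro H. apply rst_step. exact H. Qed.

Section Cheb.
Variable x : R.
Variable Q : diagram -> R.
Hypothesis HQ : is_Q_at x Q.
Hypothesis Hx : x * x + x - 1 = 0.
Variable c c' : elem.
Hypothesis Hc : c = Xp \/ c = Xn.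
Hypothesis Hc' : c' = Xp \/ c' = Xn.
Hypothesis B2 : forall k, basic [Sl k c; Sl k c'] [].
Hypothesis B1 : forall k, basic [Sl k c; Sl k Cap] [Sl k Cap].
Hypothesis Sk : forall p s w k, tangle 0 p w -> (k + 2 <= w)%nat -> tangle w s 0 ->
  Q (p ++ Sl k c :: s) + Q (p ++ Sl k c' :: s) = x * (Q (p ++ s) + Q (p ++ Sl k Cap :: Sl k Cup :: s)).
Variables (p s : diagram) (w k : nat).
Hypothesis Tp : tangle 0 p w.
Hypothesis Hk : (k + 2 <= w)%nat.
Hypothesis Ts : tangle w s 0.

Let a m := Q (p ++ repeat (Sl k c) m ++ s).
Let AA := Q (p ++ Sl k Cap :: Sl k Cup :: s).

Lemma Tpr m : tangle 0 (p ++ repeat (Sl k c) m) w.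
Proof. apply tangle_app. exists w. split; auto. apply tangle_rep; auto. Qed.

Lemma Tcc : tangle w (Sl k Cap :: Sl k Cup :: s) 0.
Proof. simpl. split. lia. split. simpl; lia. replace (w - 2 + 0 - 0 + 2)%nat with w by lia. exact Ts. Qed.

Lemma capcoll m : Q (p ++ repeat (Sl k c) m ++ Sl k Cap :: Sl k Cup :: s) = AA.
Proof.
  induction m as [|m IH]. reflexivity.
  rewrite <- IH. symmetry. destruct HQ as [Hiso _].
  assert (L : link (p ++ repeat (Sl k c) m ++ Sl k Cap :: Sl k Cup :: s)).
  { unfold link. rewrite app_assoc. apply tangle_app. exists w. split. apply Tpr. apply Tcc. }
  apply Hiso; auto. apply rst_sym. apply iso1.
  exists (p ++ repeat (Sl k c) m), [Sl k c; Sl k Cap], [Sl k Cap], (Sl k Cup :: s), w, (w - 2)%nat.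
  split. apply Tpr. split. destruct Hc as [-> | ->]; simpl; repeat split; lia.
  split. simpl. split; lia.
  split. simpl. split. lia. replace (w - 2 - 0 + 2)%nat with w by lia. exact Ts.
  split. apply B1.
  split; [rewrite repeat_snoc; rewrite <- !app_assoc; reflexivity | rewrite <- !app_assoc; reflexivity].
Qed.

Lemma rec m : a (S (S m)) + a m = x * (a (S m) + AA).
Proof.
  destruct HQ as [Hiso _].
  pose proof (Sk (p ++ repeat (Sl k c) (S m)) s w k (Tpr (S m)) Hk Ts) as E.
  rewrite <- !app_assoc in E.
  unfold a. rewrite (repeat_snoc _ (S m)), <- app_assoc. simpl app at 1.
  assert (Er : Q (p ++ repeat (Sl k c) (S m) ++ Sl k c' :: s) = Q (p ++ repeat (Sl k c) m ++ s)).
  { apply Hiso.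
    - unfold link. rewrite app_assoc. apply tangle_app. exists w. split. apply Tpr.
      simpl. split. destruct Hc' as [-> | ->]; simpl; lia. destruct Hc' as [-> | ->]; simpl;
      replace (w - 2 + 2)%nat with w by lia; exact Ts.
    - apply iso1. exists (p ++ repeat (Sl k c) m), [Sl k c; Sl k c'], [], s, w, w.
      split. apply Tpr. split. destruct Hc as [-> | ->]; destruct Hc' as [-> | ->]; simpl; repeat split; lia.
      split. reflexivity. split. exact Ts. split. apply B2.
      split; [rewrite repeat_snoc; rewrite <- !app_assoc; reflexivity | rewrite <- !app_assoc; reflexivity]. }
  rewrite <- Er. rewrite <- (capcoll (S m)). exact E.
Qed.

Lemma five : a 5 = a 0.
Proof.
  pose proof (rec 0) as R0. pose proof (rec 1) as R1. pose proof (rec 2) as R2. pose proof (rec 3) as R3.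
  assert (H : a 5 - a 0 = (x * x + x - 1) * (x * x * a 1 + x * x * AA - x * a 0 - x * a 1 - a 1 + a 0)).
  { assert (E2 : a 2 = x * a 1 - a 0 + x * AA) by lra.
    assert (E3 : a 3 = x * a 2 - a 1 + x * AA) by lra.
    assert (E4 : a 4 = x * a 3 - a 2 + x * AA) by lra.
    assert (E5 : a 5 = x * a 4 - a 3 + x * AA) by lra.
    rewrite E5, E4, E3, E2. ring. }
  rewrite Hx in H. lra.
Qed.

Lemma five_ok : Q (p ++ s) = Q (p ++ repeat (Sl k c) 5 ++ s).
Proof. symmetry. exact five. Qed.
End Cheb.

Lemma equiv5_link D E : equiv5 D E -> (link D <-> link E).
Proof.
  induction 1 as [x y H | x | x y _ IH | x y z _ IH1 _ IH2].
  - destruct H as [H | [H | H]].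
    + apply iso_step_rel in H; tauto.
    + apply (T5_rel Xp) in H; tauto.
    + apply (T5_rel Xn) in H; tauto.
  - tauto.
  - tauto.
  - tauto.
Qed.

Lemma shiftT5 k c : Defs.shift k (T5 c) = repeat (Sl k c) 5.
Proof. unfold T5. simpl. rewrite Nat.add_0_r. reflexivity. Qed.

Lemma part2 (Q : diagram -> R) : is_Q_at (2 * cos (2 * PI / 5)) Q ->
  forall L L' : diagram, link L -> equiv5 L L' -> Q L = Q L'.
Proof.
  intros HQ L L' HL H. revert HL.
  pose proof cos25 as Hx. simpl in Hx.
  induction H as [D E H | D | D E H IH | D E F H1 IH1 H2 IH2]; intro HL.
  - destruct H as [H | [H | H]].
    + apply (proj1 HQ); auto. apply iso1; auto.
    + destruct H as [p [s [w [k [Tp [Hk [Ts [-> ->]]]]]]]]. rewrite shiftT5.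
      exact (five_ok _ Q HQ Hx Xp Xn (or_introl eq_refl) (or_intror eq_refl) b_r2a b_r1ap
        (proj2 (proj2 HQ)) p s w k Tp Hk Ts).
    + destruct H as [p [s [w [k [Tp [Hk [Ts [-> ->]]]]]]]]. rewrite shiftT5.
      exact (five_ok _ Q HQ Hx Xn Xp (or_intror eq_refl) (or_introl eq_refl) b_r2b b_r1an
        (fun p s w k a b c => eq_trans (Rplus_comm _ _) (proj2 (proj2 HQ) p s w k a b c)) p s w k Tp Hk Ts).
  - reflexivity.
  - symmetry. apply IH. apply (proj2 (equiv5_link D E H)). exact HL.
  - rewrite IH1 by exact HL. apply IH2. apply (equiv5_link D E H1). exact HL.
Qed.

Theorem lemma2p6 :
  (forall (n : nat) (L L' : diagram), Nat.Odd n -> chain22 n L L' ->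
     ~ equiv5 L L') /\
  (forall Q : diagram -> R, is_Q_at (2 * cos (2 * PI / 5)) Q ->
     forall L L' : diagram, link L -> equiv5 L L' -> Q L = Q L').
Proof.
  split.
  - intros n L L' Hn Hc He. destruct (proj2 (chain_rel n L L' Hc) Hn) as [HA HL].
    exact (part1 L L' HA (equiv5_rel L L' He) HL).
  - exact part2.
Qed.
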